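(* Let $\Gamma_H$ be the H-junction tree with edges $e_1,\dots,e_5$ of propagation times $t_1,\dots,t_5$, where the interior vertices are $A$ (incident to $e_1,e_2,e_3$) and $B$ (incident to $e_3,e_4,e_5$), and let $\Gamma'_H$ be obtained from $\Gamma_H$ by permuting the edges $e_1$ and $e_5$ (so in $\Gamma'_H$ the vertex $A$ is incident to $e_5,e_2,e_3$ and $B$ to $e_3,e_4,e_1$). If $(t_1,\dots,t_5)$ satisfies Assumption 1, then as $T\to\infty$ $$N(\Gamma_H, A, T) - N(\Gamma'_H, A, T) = -\frac{1}{96\, t_2t_4}\left(\frac{1}{t_5} - \frac{1}{t_1}\right) T^3 + o(T^3).$$
   Context: An H-junction has six vertices: two interior vertices of valence $3$ joined by one edge (here $e_3$, the ''jumper''), and four valence-one vertices, each joined to one of the interior vertices by one of the remaining four edges (two per interior vertex). Dynamics: each edge $e_i$ is traversed in time $t_i$; at time $0$ the process starts at $A$ (a point departs from $A$ along each incident edge); at a valence-one vertex a point is reflected; if $k$ points arrive simultaneously at an interior vertex of valence $v$, then $v$ points leave it, one along each incident edge. $N(\Gamma,A,T)$ is the total number of points moving on the graph $\Gamma$ at time $T$ when the process starts at vertex $A$. Assumption 1: $t_1,\dots,t_5$ are linearly independent over $\mathbb{Q}$, and for every $1\le m\le 4$ and every $m$-element subset $\{s_{i_1},\dots,s_{i_m}\}\subset\{t_1,\dots,t_5\}$ the number of tuples of nonnegative integers with $s_{i_1}n_{i_1}+\dots+s_{i_m}n_{i_m}\le T$ equals $P_m(s_{i_1},\dots,s_{i_m})T^4+R_m(s_{i_1},\dots,s_{i_m})T^3+o(T^3)$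 as $T\to\infty$, for some coefficients $P_m,R_m$. *)

(* Defs.v *)
From Stdlib Require Import Reals List QArith Qreals ClassicalEpsilon.
Import ListNotations.
Open Scope R_scope.

(** Cardinality of a finite set given by a predicate: the length of a
    duplicate-free list enumerating it (all such lists have the same length);
    0 if the set is not finite (never happens in the uses below). *)
Definition fin_card {X : Type} (P : X -> Prop) : nat :=
  match excluded_middle_informative
          (exists l : list X, NoDup l /\ forall x, In x l <-> P x) with
  | left h => length (proj1_sig (constructive_indefinite_description _ h))
  | right _ => 0%nat
  end.

Section Process.
Variables (V E : Type) (ends : E -> V * V) (len : E -> R).

Definition incident (v : V) (e : E) : Prop := fst (ends e) = v \/ snd (ends e) = v.

Definition joins (e : E) (v w : V) : Prop := ends e = (v, w) \/ ends e = (w, v).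

(** [departs a v s e] : in the process started at vertex [a], a point leaves
    vertex [v] at time [s] along the edge [e].  A point leaving [v] at time [s] along [e]
    arrives at the other end [w] of [e] at time [s + len e]; then one point
    leaves [w] along each edge incident to [w] (for a valence-one vertex this
    is the reflection along the same edge; for an interior vertex, any number
    of points arriving simultaneously produce exactly one point per incident
    edge, since departures are recorded as a set). *)
Inductive departs (a : V) : V -> R -> E -> Prop :=
| dep_start : forall e, incident a e -> departs a a 0 e
| dep_next : forall v s e w e',
    departs a v s e -> joins e v w -> incident w e' ->
    departs a w (s + len e) e'.

Definition Npoints (a : V) (T : R) : nat :=
  fin_card (fun x : V * R * E =>
    match x with (v, s, e) => departs a v s e /\ s <= T < s + len e end).
End Process.

Inductive hvert := vA | vB | vL1 | vL2 | vL4 | vL5.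
Inductive hedge := e1 | e2 | e3 | e4 | e5.

Definition endsH (e : hedge) : hvert * hvert :=
  match e with
  | e1 => (vA, vL1) | e2 => (vA, vL2) | e3 => (vA, vB)
  | e4 => (vB, vL4) | e5 => (vB, vL5)
  end.

Definition endsH' (e : hedge) : hvert * hvert :=
  match e with
  | e1 => (vB, vL1) | e2 => (vA, vL2) | e3 => (vA, vB)
  | e4 => (vB, vL4) | e5 => (vA, vL5)
  end.

Definition tlen (t1 t2 t3 t4 t5 : R) (e : hedge) : R :=
  match e with e1 => t1 | e2 => t2 | e3 => t3 | e4 => t4 | e5 => t5 end.

Fixpoint lin_comb (s : list R) (n : list nat) : R :=
  match s, n with
  | x :: s', k :: n' => x * INR k + lin_comb s' n'
  | _, _ => 0
  end.

Definition lattice_count (s : list R) (T : R) : nat :=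
  fin_card (fun n : list nat => length n = length s /\ lin_comb s n <= T).

Definition asymp_4_3 (f : R -> R) (P Rc : R) : Prop :=
  forall eps, 0 < eps -> exists T0, forall T, T0 <= T ->
    Rabs (f T - (P * T ^ 4 + Rc * T ^ 3)) <= eps * T ^ 3.

Definition asymp_3 (f : R -> R) (c : R) : Prop :=
  forall eps, 0 < eps -> exists T0, forall T, T0 <= T ->
    Rabs (f T - c * T ^ 3) <= eps * T ^ 3.

Definition Assumption1 (t1 t2 t3 t4 t5 : R) : Prop :=
  (forall q1 q2 q3 q4 q5 : Q,
      (Q2R q1 * t1 + Q2R q2 * t2 + Q2R q3 * t3 + Q2R q4 * t4 + Q2R q5 * t5 = 0)%R ->
      (q1 == 0 /\ q2 == 0 /\ q3 == 0 /\ q4 == 0 /\ q5 == 0)%Q)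
  /\
  (* every m-element subset (1 <= m <= 4) of {t1,...,t5}, given by a
     duplicate-free list of indices in {0,...,4} *)
  (forall idx : list nat, NoDup idx -> (1 <= length idx <= 4)%nat ->
      (forall i, In i idx -> (i < 5)%nat) ->
      exists P Rc : R,
        asymp_4_3 (fun T => INR (lattice_count
                     (map (fun i => nth i [t1; t2; t3; t4; t5] 0) idx) T)) P Rc).

(* Main.v *)
Require Import Defs.
From Stdlib Require Import Reals Lra Lia List Arith Factorial QArith Qreals ZArith ZifyNat Permutation FunctionalExtensionality PropExtensionality Classical ClassicalEpsilon.
Import ListNotations.
Open Scope R_scope.

Ltac plia := zify; Z.to_euclidean_division_equations; lia.


Definition has_card {X : Type} (P : X -> Prop) (n : nat) : Prop :=
  exists l, NoDup l /\ (forall x, In x l <-> P x) /\ length l = n.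

Lemma fin_card_has {X : Type} (P : X -> Prop) n : has_card P n -> fin_card P = n.
Proof.
  intros [l [Hnd [Hin Hlen]]]. unfold fin_card.
  destruct excluded_middle_informative as [h|h].
  - destruct (constructive_indefinite_description _ h) as [l' [Hnd' Hin']]; simpl.
    subst n. apply Nat.le_antisymm; apply NoDup_incl_length; auto; intros x Hx.
    + apply Hin; apply Hin'; auto.
    + apply Hin'; apply Hin; auto.
  - exfalso; apply h; eauto.
Qed.

Lemma has_card_unique {X : Type} (P : X -> Prop) n m : has_card P n -> has_card P m -> n = m.
Proof. intros H1 H2. rewrite <- (fin_card_has _ _ H1). apply fin_card_has; auto. Qed.

Lemma fin_card_ext {X : Type} (P Q : X -> Prop) : (forall x, P x <-> Q x) -> fin_card P = fin_card Q.
Proof.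
  intros H. assert (P = Q) as ->; auto.
  apply functional_extensionality; intros x; apply propositional_extensionality; auto.
Qed.

Lemma has_card_ext {X : Type} (P Q : X -> Prop) n : (forall x, P x <-> Q x) -> has_card P n -> has_card Q n.
Proof.
  intros H [l [Hnd [Hin Hlen]]]. exists l; repeat split; auto; intros Hx.
  - apply H, Hin; auto.
  - apply Hin, H; auto.
Qed.

Lemma NoDup_map_on {X Y : Type} (f : X -> Y) (l : list X) :
  (forall x y, In x l -> In y l -> f x = f y -> x = y) -> NoDup l -> NoDup (map f l).
Proof.
  induction l as [|a l IH]; simpl; intros Hinj Hnd; constructor.
  - intros Hm. apply in_map_iff in Hm. destruct Hm as [b [Hb Hbl]].
    inversion Hnd; subst. assert (b = a) by (apply Hinj; auto).
    subst; contradiction.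
  - inversion Hnd; subst. apply IH; auto.
Qed.

Lemma has_card_map {X Y : Type} (P : X -> Prop) (Q : Y -> Prop) (f : X -> Y) n :
  (forall x, P x -> Q (f x)) ->
  (forall x y, P x -> P y -> f x = f y -> x = y) ->
  (forall y, Q y -> exists x, P x /\ f x = y) ->
  has_card P n -> has_card Q n.
Proof.
  intros H1 H2 H3 [l [Hnd [Hin Hlen]]]. exists (map f l). repeat split.
  - apply NoDup_map_on; auto. intros x y Hx Hy; apply H2; apply Hin; auto.
  - intros Hm. apply in_map_iff in Hm. destruct Hm as [b [<- Hb]]. apply H1, Hin; auto.
  - intros Hy. destruct (H3 _ Hy) as [z [Hz <-]]. apply in_map, Hin; auto.
  - rewrite length_map; auto.
Qed.

Lemma list_pull {X Y : Type} (P : X -> Prop) (Q : Y -> Prop) (f : X -> Y) :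
  (forall y, Q y -> exists x, P x /\ f x = y) ->
  forall l, (forall y, In y l -> Q y) -> exists l', map f l' = l /\ (forall x, In x l' -> P x).
Proof.
  intros H3 l. induction l as [|a l IH]; intros Hl.
  - exists []; simpl; split; auto; tauto.
  - destruct IH as [l' [E HP]]. { intros; apply Hl; simpl; auto. }
    destruct (H3 a) as [x [Hx Ex]]. { apply Hl; simpl; auto. }
    exists (x :: l'); simpl; split. { rewrite E, Ex; auto. }
    intros z [<-|Hz]; auto.
Qed.

Lemma has_card_pull {X Y : Type} (P : X -> Prop) (Q : Y -> Prop) (f : X -> Y) n :
  (forall x, P x -> Q (f x)) ->
  (forall x y, P x -> P y -> f x = f y -> x = y) ->
  (forall y, Q y -> exists x, P x /\ f x = y) ->
  has_card Q n -> has_card P n.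
Proof.
  intros H1 H2 H3 [l [Hnd [Hin Hlen]]].
  destruct (list_pull P Q f H3 l) as [l' [E HP]]. { intros; apply Hin; auto. }
  exists l'. subst l. repeat split.
  - eapply NoDup_map_inv; eauto.
  - apply HP.
  - intros Hx. assert (In (f x) (map f l')) as Hm by (apply Hin; auto).
    apply in_map_iff in Hm. destruct Hm as [y [Ey Hy]].
    assert (y = x) as <- by (apply H2; auto). auto.
  - rewrite length_map in Hlen; auto.
Qed.

Lemma has_card_or {X : Type} (P Q : X -> Prop) n m :
  (forall x, P x -> Q x -> False) -> has_card P n -> has_card Q m ->
  has_card (fun x => P x \/ Q x) (n + m).
Proof.
  intros Hd [l1 [N1 [I1 L1]]] [l2 [N2 [I2 L2]]]. exists (l1 ++ l2). repeat split.
  - apply NoDup_app; auto. intros x Hx1 Hx2. apply (Hd x); [apply I1|apply I2]; auto.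
  - intros Hx. apply in_app_or in Hx. destruct Hx as [Hx|Hx]; [left; apply I1|right; apply I2]; auto.
  - intros [Hx|Hx]; apply in_or_app; [left; apply I1|right; apply I2]; auto.
  - rewrite length_app; lia.
Qed.

Lemma has_card_empty {X : Type} (P : X -> Prop) : (forall x, ~ P x) -> has_card P 0.
Proof. intros H. exists []; repeat split; simpl; try tauto. constructor. intros Hx; exact (H _ Hx). Qed.

Lemma has_card_single {X : Type} (P : X -> Prop) a : (forall x, P x <-> x = a) -> has_card P 1.
Proof. intros H. exists [a]; repeat split; simpl.
  - constructor; [simpl; tauto|constructor].
  - intros [<-|[]]; apply H; auto.
  - intros Hx; left; symmetry; apply H; auto.
Qed.


Definition LC (s : list R) (Y : R) (n : list nat) : Prop := length n = length s /\ lin_comb s n <= Y.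

Definition allpos (s : list R) : Prop := Forall (fun x => 0 < x) s.

Lemma lin_comb_nonneg s n : allpos s -> 0 <= lin_comb s n.
Proof.
  revert n; induction s as [|x s IH]; intros [|k n] H; simpl; try lra.
  inversion H; subst. specialize (IH n H3). pose proof (pos_INR k). nra.
Qed.

Lemma floor_ind (x : R) (P : R -> Prop) : 0 < x ->
  (forall Y, Y < 0 -> P Y) -> (forall Y, 0 <= Y -> P (Y - x) -> P Y) -> forall Y, P Y.
Proof.
  intros Hx H0 HS.
  assert (forall n, forall Y, Y < INR n * x -> P Y).
  { induction n as [|n IH]; intros Y HY.
    - apply H0. simpl in HY. lra.
    - destruct (Rlt_dec Y 0). apply H0; auto.
      apply HS. lra. apply IH. rewrite S_INR in HY. lra. }
  intros Y. destruct (archimed (Y / x)) as [H1 _].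
  destruct (Z_lt_le_dec (up (Y/x)) 0) as [Hz|Hz].
  2:{
apply (H (Z.to_nat (up (Y / x)))). rewrite INR_IZR_INZ, Z2Nat.id; auto.
    apply (Rmult_lt_compat_r x) in H1; auto. unfold Rdiv in H1.
    rewrite Rmult_assoc, Rinv_l, Rmult_1_r in H1; lra. }
  apply H0. apply IZR_lt in Hz. 
    assert (Y / x < 0) by lra. unfold Rdiv in H2.
    destruct (Rlt_dec Y 0); auto. exfalso.
    assert (0 <= Y * / x) by (apply Rmult_le_pos; [lra| left; apply Rinv_0_lt_compat; auto]). lra.
Qed.

Lemma lc_empty s Y : allpos s -> Y < 0 -> has_card (LC s Y) 0.
Proof.
  intros Hs HY. apply has_card_empty. intros n [_ H]. pose proof (lin_comb_nonneg s n Hs). lra.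
Qed.

Lemma lc_nil_card Y : 0 <= Y -> has_card (LC [] Y) 1.
Proof.
  intros HY. apply (has_card_single _ []). intros n; unfold LC; simpl; split.
  - intros [H _]. destruct n; simpl in *; auto; discriminate.
  - intros ->; simpl; split; auto.
Qed.

Lemma LC_cons_split x r Y n : 0 < x ->
  LC (x :: r) Y n <->
  (exists n', n = 0%nat :: n' /\ LC r Y n') \/ (exists k n', n = S k :: n' /\ LC (x :: r) (Y - x) (k :: n')).
Proof.
  intros Hx; unfold LC; cbn [lin_comb length]; split.
  - intros [Hl Hc]. destruct n as [|k n']; cbn [lin_comb length] in *; try discriminate.
    destruct k as [|k].
    + left; exists n'; split; auto. cbn [INR] in Hc. split; [lia|lra].
    + right; exists k, n'; split; auto. cbn [lin_comb length]. rewrite S_INR in Hc. split; [lia|lra].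
  - intros [[n' [-> [Hl Hc]]]|[k [n' [-> [Hl Hc]]]]]; cbn [lin_comb length] in *.
    + simpl INR in *. split; [lia|lra].
    + rewrite S_INR. split; [lia|lra].
Qed.

Lemma lc_has_card s : allpos s -> forall Y, exists m, has_card (LC s Y) m.
Proof.
  induction s as [|x r IH]; intros Hs Y.
  - destruct (Rlt_dec Y 0). { exists 0%nat; apply lc_empty; [constructor|auto]. }
    exists 1%nat; apply lc_nil_card; lra.
  - inversion Hs; subst. specialize (IH H2).
    pattern Y; apply (floor_ind x); auto.
    + intros Z HZ. exists 0%nat; apply lc_empty; auto.
    + intros Z HZ [m Hm]. destruct (IH Z) as [m' Hm'].
      exists (m' + m)%nat. eapply has_card_ext.
      { intros n. symmetry. apply LC_cons_split; auto. }
      apply has_card_or.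
      * intros n [n' [-> _]] [k [n'' [E _]]]; discriminate.
      * apply (has_card_map (LC r Z) _ (fun n' => 0%nat :: n')); eauto.
        intros a b _ _ E; inversion E; auto.
        intros y [n' [-> H]]; eauto.
      * apply (has_card_map (LC (x :: r) (Z - x)) _ (fun n => match n with [] => [] | k :: n' => S k :: n' end)); auto.
        -- intros [|k n'] Hn. destruct Hn as [Hl _]; simpl in Hl; discriminate.
           exists k, n'; split; auto.
        -- intros [|a l] [|b l'] Ha Hb E; try (destruct Ha as [Ha _]; simpl in Ha; discriminate);
           try (destruct Hb as [Hb _]; simpl in Hb; discriminate). inversion E; auto.
        -- intros y [k [n' [-> H]]]; exists (k :: n'); auto.
Qed.

Lemma lc_card s Y : allpos s -> has_card (LC s Y) (lattice_count s Y).
Proof.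
  intros Hs. destruct (lc_has_card s Hs Y) as [m Hm].
  unfold lattice_count. fold (LC s Y). rewrite (fin_card_has _ _ Hm); auto.
Qed.

Lemma lc_neg s Y : allpos s -> Y < 0 -> lattice_count s Y = 0%nat.
Proof. intros Hs HY. eapply has_card_unique. apply lc_card; auto. apply lc_empty; auto. Qed.

Lemma lc_nil Y : 0 <= Y -> lattice_count [] Y = 1%nat.
Proof. intros HY. eapply has_card_unique. apply lc_card; constructor. apply lc_nil_card; auto. Qed.

Lemma lc_rec x r Y : allpos (x :: r) ->
  lattice_count (x :: r) Y = (lattice_count r Y + lattice_count (x :: r) (Y - x))%nat.
Proof.
  intros Hs. inversion Hs; subst. eapply has_card_unique. apply lc_card; auto.
  eapply has_card_ext.
  { intros n. symmetry. apply LC_cons_split; auto. }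
  apply has_card_or.
  * intros n [n' [-> _]] [k [n'' [E _]]]; discriminate.
  * apply (has_card_map (LC r Y) _ (fun n' => 0%nat :: n')); eauto.
    intros a b _ _ E; inversion E; auto.
    intros y [n' [-> H]]; eauto. apply lc_card; auto.
  * apply (has_card_map (LC (x :: r) (Y - x)) _ (fun n => match n with [] => [] | k :: n' => S k :: n' end)); auto.
    -- intros [|k n'] Hn. destruct Hn as [Hl _]; simpl in Hl; discriminate.
       exists k, n'; split; auto.
    -- intros [|a l] [|b l'] Ha Hb E; try (destruct Ha as [Ha _]; simpl in Ha; discriminate);
       try (destruct Hb as [Hb _]; simpl in Hb; discriminate). inversion E; auto.
    -- intros y [k [n' [-> H]]]; exists (k :: n'); auto.
    -- apply lc_card; auto.
Qed.

Lemma lc_swap x y r Y : allpos (x :: y :: r) ->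
  lattice_count (x :: y :: r) Y = lattice_count (y :: x :: r) Y.
Proof.
  intros Hs. assert (Hs' : allpos (y :: x :: r)).
  { inversion Hs; subst. inversion H2; subst. repeat constructor; auto. }
  eapply has_card_unique. apply lc_card; auto.
  apply (has_card_map (LC (y :: x :: r) Y) _ (fun n => match n with a :: b :: n' => b :: a :: n' | _ => n end)).
  - intros [|a [|b n']] [Hl Hc]; simpl in Hl; try discriminate.
    split; [simpl; auto|]. cbn [lin_comb] in *. lra.
  - intros [|a [|b n']] [|a' [|b' n'']] [Hl _] [Hl' _] E; simpl in Hl, Hl'; try discriminate.
    inversion E; auto.
  - intros [|a [|b n']] [Hl Hc]; simpl in Hl; try discriminate.
    exists (b :: a :: n'). split; auto. split; [simpl; auto|]. cbn [lin_comb] in *. lra.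
  - apply lc_card; auto.
Qed.

Lemma lc_cong x r r' : allpos (x :: r) -> allpos (x :: r') ->
  (forall Y, lattice_count r Y = lattice_count r' Y) ->
  forall Y, lattice_count (x :: r) Y = lattice_count (x :: r') Y.
Proof.
  intros H1 H2 H Y. assert (0 < x) by (inversion H1; auto).
  pattern Y; apply (floor_ind x); auto.
  - intros Z HZ. rewrite !lc_neg; auto.
  - intros Z HZ IH. rewrite (lc_rec x r), (lc_rec x r'); auto.
Qed.

Lemma allpos_perm s s' : Permutation s s' -> allpos s -> allpos s'.
Proof. intros P H. unfold allpos in *. eapply Permutation_Forall; eauto. Qed.

Lemma lc_perm s s' : Permutation s s' -> allpos s -> forall Y, lattice_count s Y = lattice_count s' Y.
Proof.
  intros P. induction P; intros Hs Y; auto.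
  - apply lc_cong; auto.
    + apply allpos_perm with (x :: l); auto.
    + intros Z; apply IHP. inversion Hs; auto.
  - apply lc_swap; auto.
  - rewrite IHP1; auto. apply IHP2. apply allpos_perm with l; auto.
Qed.

Lemma lin_comb_scale c s n : lin_comb (map (fun a => c * a) s) n = c * lin_comb s n.
Proof.
  revert n; induction s as [|x s IH]; intros [|k n]; cbn [map lin_comb]; try ring.
  rewrite IH; ring.
Qed.

Lemma lc_scale2 s Y : lattice_count (map (fun a => 2 * a) s) Y = lattice_count s (Y / 2).
Proof.
  unfold lattice_count. apply fin_card_ext. intros n. rewrite length_map, lin_comb_scale.
  split; intros [H1 H2]; split; auto; lra.
Qed.


Definition sumR (s : list R) := fold_right Rplus 0 s.
Definition prodR (s : list R) := fold_right Rmult 1 s.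

Lemma prodR_pos s : allpos s -> 0 < prodR s.
Proof. induction s as [|x s IH]; simpl; intros H; [lra|]. inversion H; subst. apply Rmult_lt_0_compat; auto. Qed.

Lemma sumR_nonneg s : allpos s -> 0 <= sumR s.
Proof. induction s as [|x s IH]; simpl; intros H; [lra|]. inversion H; subst. specialize (IH H3). lra. Qed.

Lemma powA m a Y : 0 <= a -> a <= Y -> Y ^ (S m) <= INR (S m) * a * Y ^ m + (Y - a) ^ (S m).
Proof.
  intros Ha HaY. induction m as [|m IH].
  - simpl. lra.
  - assert (0 <= Y - a) by lra.
    assert ((Y - a) ^ (S m) <= Y ^ (S m)) by (apply pow_incr; lra).
    assert (0 <= Y ^ m) by (apply pow_le; lra).
    assert (0 <= Y) by lra.
    replace (Y ^ S (S m)) with (Y * Y ^ (S m)) by (simpl; ring).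
    replace ((Y - a) ^ S (S m)) with ((Y - a) * (Y - a) ^ (S m)) by (simpl; ring).
    replace (Y ^ S m) with (Y * Y ^ m) in * by (simpl; ring).
    rewrite S_INR. rewrite S_INR in IH.
    pose proof (Rmult_le_compat_l Y _ _ H2 IH). pose proof (Rmult_le_compat_l a _ _ Ha H0). rewrite S_INR. nra.
Qed.

Lemma powB m Z x : 0 <= Z -> 0 <= x -> Z ^ (S m) + INR (S m) * x * Z ^ m <= (Z + x) ^ (S m).
Proof.
  intros HZ Hx. induction m as [|m IH].
  - simpl. lra.
  - assert (0 <= Z ^ m) by (apply pow_le; lra).
    replace (Z ^ S (S m)) with (Z * Z ^ (S m)) by (simpl; ring).
    replace ((Z + x) ^ S (S m)) with ((Z + x) * (Z + x) ^ (S m)) by (simpl; ring).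
    replace (Z ^ S m) with (Z * Z ^ m) in * by (simpl; ring).
    rewrite S_INR. rewrite S_INR in IH. rewrite S_INR.
    assert (0 <= INR m) by apply pos_INR.
    assert (0 <= Z + x) by lra.
    pose proof (Rmult_le_compat_l (Z + x) _ _ H1 IH).
    assert (0 <= (INR m + 1) * (x * x) * Z ^ m).
    { apply Rmult_le_pos; [apply Rmult_le_pos|]; nra. }
    nra.
Qed.

Lemma fact_pos n : 0 < INR (fact n).
Proof. apply lt_0_INR. apply lt_O_fact. Qed.

Lemma fact_S n : INR (fact (S n)) = INR (S n) * INR (fact n).
Proof. rewrite <- mult_INR. reflexivity. Qed.

Lemma helper_div a a1 a2 F P x k :
  0 < F -> 0 < P -> 0 < x -> 0 < k ->
  a <= k * x * a1 + a2 -> a / (k * F * (x * P)) <= a1 / (F * P) + a2 / (k * F * (x * P)).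
Proof.
  intros HF HP Hx Hk H.
  replace (a1 / (F * P)) with ((k * x * a1) / (k * F * (x * P))) by (field; lra).
  rewrite <- Rdiv_plus_distr. unfold Rdiv. apply Rmult_le_compat_r; auto.
  left; apply Rinv_0_lt_compat. repeat apply Rmult_lt_0_compat; auto.
Qed.

Lemma helper_div2 a a1 a2 F P x k :
  0 < F -> 0 < P -> 0 < x -> 0 < k ->
  k * x * a1 + a2 <= a -> a1 / (F * P) + a2 / (k * F * (x * P)) <= a / (k * F * (x * P)).
Proof.
  intros HF HP Hx Hk H.
  replace (a1 / (F * P)) with ((k * x * a1) / (k * F * (x * P))) by (field; lra).
  rewrite <- Rdiv_plus_distr. unfold Rdiv. apply Rmult_le_compat_r; auto.
  left; apply Rinv_0_lt_compat. repeat apply Rmult_lt_0_compat; auto.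
Qed.

Lemma lc_lower s : allpos s -> forall Y, 0 <= Y ->
  Y ^ (length s) / (INR (fact (length s)) * prodR s) <= INR (lattice_count s Y).
Proof.
  induction s as [|x r IH]; intros Hs Y HY.
  - rewrite lc_nil; auto. simpl. lra.
  - inversion Hs; subst. specialize (IH H2). assert (HPr := prodR_pos r H2).
    assert (HF := fact_pos (length r)).
    revert HY. pattern Y; apply (floor_ind x); auto.
    + intros; lra.
    + intros Z HZ IHZ _. rewrite lc_rec; auto. rewrite plus_INR.
      cbn [length prodR fold_right]. fold (prodR r). rewrite fact_S.
      assert (HS : 0 < INR (S (length r))) by (apply lt_0_INR; lia).
      destruct (Rlt_dec Z x) as [Hlt|Hge].
      * rewrite (lc_neg (x :: r)); auto; [|lra]. rewrite INR_0, Rplus_0_r.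
        specialize (IH Z HZ).
        eapply Rle_trans; [|apply IH].
        eapply Rle_trans; [apply (helper_div _ (Z ^ length r) 0); auto|].
        2:{ unfold Rdiv at 2. rewrite Rmult_0_l, Rplus_0_r. lra. }
        assert (0 <= Z ^ length r) by (apply pow_le; lra).
        assert (Z ^ S (length r) = Z * Z ^ length r) as -> by (simpl; ring).
        assert (1 <= INR (S (length r))) by (rewrite S_INR; pose proof (pos_INR (length r)); lra).
        assert (0 <= (x - Z) * Z ^ length r) by (apply Rmult_le_pos; lra).
        assert (0 <= (INR (S (length r)) - 1) * (x * Z ^ length r)) by (apply Rmult_le_pos; [lra|apply Rmult_le_pos; lra]).
        nra.
      * specialize (IHZ ltac:(lra)). cbn [length prodR fold_right] in IHZ. fold (prodR r) in IHZ.
        rewrite fact_S in IHZ.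
        eapply Rle_trans; [|apply Rplus_le_compat; [apply (IH Z HZ)|apply IHZ]].
        apply helper_div; auto. apply powA; lra.
Qed.

Lemma lc_upper s : allpos s -> forall Y, 0 <= Y ->
  INR (lattice_count s Y) <= (Y + sumR s) ^ (length s) / (INR (fact (length s)) * prodR s).
Proof.
  induction s as [|x r IH]; intros Hs Y HY.
  - rewrite lc_nil; auto. simpl. lra.
  - inversion Hs; subst. specialize (IH H2). assert (HPr := prodR_pos r H2).
    assert (HF := fact_pos (length r)). assert (Hsr := sumR_nonneg r H2).
    revert HY. pattern Y; apply (floor_ind x); auto.
    + intros; lra.
    + intros Z HZ IHZ _. rewrite lc_rec; auto. rewrite plus_INR.
      cbn [length prodR sumR fold_right]. fold (prodR r) (sumR r). rewrite fact_S.
      assert (HS : 0 < INR (S (length r))) by (apply lt_0_INR; lia).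
      assert (E : Z + (x + sumR r) = (Z + sumR r) + x) by ring. rewrite E.
      assert (Hc : INR (lattice_count (x :: r) (Z - x)) <=
         (Z + sumR r) ^ S (length r) / (INR (S (length r)) * INR (fact (length r)) * (x * prodR r))).
      { destruct (Rlt_dec Z x) as [Hlt|Hge].
        - rewrite (lc_neg (x :: r)); auto; [|lra]. simpl INR at 1.
          apply Rmult_le_pos. apply pow_le; lra.
          left; apply Rinv_0_lt_compat. repeat apply Rmult_lt_0_compat; auto.
        - specialize (IHZ ltac:(lra)). cbn [length prodR sumR fold_right] in IHZ. fold (prodR r) (sumR r) in IHZ.
          rewrite fact_S in IHZ. replace (Z - x + (x + sumR r)) with (Z + sumR r) in IHZ by ring. auto. }
      eapply Rle_trans; [apply Rplus_le_compat; [apply (IH Z HZ)|apply Hc]|].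
      apply helper_div2; auto. rewrite Rplus_comm. apply powB; lra.
Qed.


Definition vec := (nat * nat * nat * nat * nat)%type.

Definition dotv (t1 t2 t3 t4 t5 : R) (c : vec) : R :=
  let '(c1, c2, c3, c4, c5) := c in
  INR c1 * t1 + INR c2 * t2 + INR c3 * t3 + INR c4 * t4 + INR c5 * t5.

Definition par (v : hvert) : vec :=
  match v with
  | vA => (0, 0, 0, 0, 0) | vL1 => (1, 0, 0, 0, 0) | vL2 => (0, 1, 0, 0, 0)
  | vB => (0, 0, 1, 0, 0) | vL4 => (0, 0, 1, 1, 0) | vL5 => (0, 0, 1, 0, 1)
  end%nat.

Definition W (v : hvert) (c : vec) : Prop :=
  let '(p1, p2, p3, p4, p5) := par v in
  let '(c1, c2, c3, c4, c5) := c in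
  (c1 mod 2 = p1 /\ c2 mod 2 = p2 /\ c3 mod 2 = p3 /\ c4 mod 2 = p4 /\ c5 mod 2 = p5 /\
   (0 < c4 + c5 -> 0 < c3))%nat.

Definition bump (e : hedge) (c : vec) : vec :=
  let '(c1, c2, c3, c4, c5) := c in
  match e with
  | e1 => (S c1, c2, c3, c4, c5) | e2 => (c1, S c2, c3, c4, c5)
  | e3 => (c1, c2, S c3, c4, c5) | e4 => (c1, c2, c3, S c4, c5)
  | e5 => (c1, c2, c3, c4, S c5)
  end.

Definition sumc (c : vec) : nat := let '(c1, c2, c3, c4, c5) := c in (c1 + c2 + c3 + c4 + c5)%nat.

Lemma dotv_bump t1 t2 t3 t4 t5 e c :
  dotv t1 t2 t3 t4 t5 (bump e c) = dotv t1 t2 t3 t4 t5 c + tlen t1 t2 t3 t4 t5 e.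
Proof. destruct c as [[[[c1 c2] c3] c4] c5]; destruct e; cbn [bump dotv tlen]; rewrite S_INR; ring. Qed.

Lemma W_step v w e c : W v c -> joins hvert hedge endsH e v w -> W w (bump e c).
Proof.
  destruct c as [[[[c1 c2] c3] c4] c5]. intros HW Hj.
  destruct e; destruct Hj as [E|E]; cbn [endsH] in E; inversion E; subst;
  cbn [W par bump] in *; plia.
Qed.

Lemma W_pred v c : W v c -> ~ (v = vA /\ c = (0,0,0,0,0)%nat) ->
  exists e u c', joins hvert hedge endsH e u v /\ c = bump e c' /\ W u c'.
Proof.
  destruct c as [[[[c1 c2] c3] c4] c5]. intros HW Hn.
  unfold joins; destruct v; cbn [W par] in HW.
  - destruct (Nat.eq_dec c1 0).
    + destruct (Nat.eq_dec c2 0).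
      * destruct (Nat.eq_dec c3 0).
        -- exfalso; apply Hn; split; auto. f_equal; [f_equal; [f_equal; [f_equal|]|]|]; lia.
        -- exists e3, vB, (c1, c2, pred c3, c4, c5). cbn [endsH bump W par].
           split; [right; auto|]. split; [f_equal; f_equal; f_equal; f_equal; lia|]. plia.
      * exists e2, vL2, (c1, pred c2, c3, c4, c5). cbn [endsH bump W par].
        split; [right; auto|]. split; [f_equal; f_equal; f_equal; f_equal; lia|]. plia.
    + exists e1, vL1, (pred c1, c2, c3, c4, c5). cbn [endsH bump W par].
      split; [right; auto|]. split; [f_equal; f_equal; f_equal; f_equal; lia|]. plia.
  - destruct (Nat.eq_dec c4 0).
    + destruct (Nat.eq_dec c5 0).
      * exists e3, vA, (c1, c2, pred c3, c4, c5). cbn [endsH bump W par].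
        split; [left; auto|]. split; [f_equal; f_equal; f_equal; f_equal; plia|]. plia.
      * exists e5, vL5, (c1, c2, c3, c4, pred c5). cbn [endsH bump W par].
        split; [right; auto|]. split; [f_equal; lia|]. plia.
    + exists e4, vL4, (c1, c2, c3, pred c4, c5). cbn [endsH bump W par].
      split; [right; auto|]. split; [f_equal; f_equal; lia|]. plia.
  - exists e1, vA, (pred c1, c2, c3, c4, c5). cbn [endsH bump W par].
    split; [left; auto|]. split; [f_equal; f_equal; f_equal; f_equal; plia|]. plia.
  - exists e2, vA, (c1, pred c2, c3, c4, c5). cbn [endsH bump W par].
    split; [left; auto|]. split; [f_equal; f_equal; f_equal; f_equal; plia|]. plia.
  - exists e4, vB, (c1, c2, c3, pred c4, c5). cbn [endsH bump W par].
    split; [left; auto|]. split; [f_equal; f_equal; plia|]. plia.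
  - exists e5, vB, (c1, c2, c3, c4, pred c5). cbn [endsH bump W par].
    split; [left; auto|]. split; [f_equal; plia|]. plia.
Qed.

Section Dep.
Variables t1 t2 t3 t4 t5 : R.
Let len := tlen t1 t2 t3 t4 t5.

Definition reachH (v : hvert) (s : R) : Prop := exists c, W v c /\ s = dotv t1 t2 t3 t4 t5 c.

Lemma departs_reach v s e : departs hvert hedge endsH len vA v s e -> incident hvert hedge endsH v e /\ reachH v s.
Proof.
  induction 1 as [e Hi|v s e w e' Hd IH Hj Hi].
  - split; auto. exists (0,0,0,0,0)%nat. cbn [W par dotv]. split; [plia|]. simpl; ring.
  - split; auto. destruct IH as [_ [c [HW ->]]]. exists (bump e c). split.
    + eapply W_step; eauto.
    + rewrite dotv_bump; auto.
Qed.

Lemma reach_departs v s e : incident hvert hedge endsH v e -> reachH v s -> departs hvert hedge endsH len vA v s e.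
Proof.
  intros Hi [c [HW ->]]. remember (sumc c) as N eqn:HN. revert v c e HW Hi HN.
  induction N as [N IH] using (well_founded_induction lt_wf).
  intros v c e HW Hi HN.
  destruct (Classical_Prop.classic (v = vA /\ c = (0,0,0,0,0)%nat)) as [[-> ->]|Hn].
  - replace (dotv t1 t2 t3 t4 t5 (0,0,0,0,0)%nat) with 0 by (simpl; ring).
    constructor; auto.
  - destruct (W_pred v c HW Hn) as [e0 [u [c' [Hj [-> HW']]]]].
    rewrite dotv_bump. apply dep_next with u; auto.
    apply (IH (sumc c')); auto.
    + subst N. destruct c' as [[[[c1 c2] c3] c4] c5]; destruct e0; simpl; lia.
    + destruct Hj as [E|E]; unfold incident; rewrite E; simpl; auto.
Qed.

End Dep.


Lemma window_unique t T r j j' : 0 < t ->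
  T - t < INR j * t + r -> INR j * t + r <= T ->
  T - t < INR j' * t + r -> INR j' * t + r <= T -> j = j'.
Proof.
  intros Ht H1 H2 H3 H4.
  destruct (lt_eq_lt_dec j j') as [[Hl|He]|Hl]; auto; exfalso.
  - apply le_INR in Hl. rewrite S_INR in Hl. nra.
  - apply le_INR in Hl. rewrite S_INR in Hl. nra.
Qed.

Lemma window_exists t T r : 0 < t -> r <= T -> exists j, T - t < INR j * t + r /\ INR j * t + r <= T.
Proof.
  intros Ht Hr.
  assert (forall Y, 0 <= Y -> exists j, Y - t < INR j * t /\ INR j * t <= Y) as H.
  { intros Y. pattern Y; apply (floor_ind t); auto.
    - intros; lra.
    - intros Z HZ IH _. destruct (Rlt_dec Z t).
      + exists 0%nat. simpl; lra.
      + destruct (IH ltac:(lra)) as [j [Hj1 Hj2]]. exists (S j). rewrite S_INR. lra. }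
  destruct (H (T - r)) as [j [Hj1 Hj2]]; [lra|]. exists j; lra.
Qed.

Lemma INR_ev c : (c mod 2 = 0)%nat -> INR c = 2 * INR (c / 2).
Proof. intros H. replace c with (2 * (c / 2))%nat at 1 by plia. rewrite mult_INR. simpl; ring. Qed.
Lemma INR_od c : (c mod 2 = 1)%nat -> INR c = 2 * INR (c / 2) + 1.
Proof. intros H. replace c with (2 * (c / 2) + 1)%nat at 1 by plia. rewrite plus_INR, mult_INR. simpl; ring. Qed.
Lemma INR_evp c : (c mod 2 = 0)%nat -> (0 < c)%nat -> INR c = 2 * INR (c / 2 - 1) + 2.
Proof. intros H H'. replace c with (2 * (c / 2 - 1) + 2)%nat at 1 by plia. rewrite plus_INR, mult_INR. simpl; ring. Qed.

Section Count.
Variables t1 t2 t3 t4 t5 : R.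
Hypotheses (h1 : 0 < t1) (h2 : 0 < t2) (h3 : 0 < t3) (h4 : 0 < t4) (h5 : 0 < t5).
Hypothesis Inj : forall c c', dotv t1 t2 t3 t4 t5 c = dotv t1 t2 t3 t4 t5 c' -> c = c'.
Let len := tlen t1 t2 t3 t4 t5.
Let dot := dotv t1 t2 t3 t4 t5.

Definition Pe (T : R) (e : hedge) (x : hvert * R * hedge) : Prop :=
  let '(v, s, e') := x in e' = e /\ departs hvert hedge endsH len vA v s e' /\ s <= T < s + len e'.

Definition Ve (T : R) (a b : hvert) (e : hedge) (c : vec) : Prop :=
  (W a c \/ W b c) /\ T - len e < dot c <= T.

Lemma edge_card T e a b (vf : vec -> hvert) n :
  incident hvert hedge endsH a e -> incident hvert hedge endsH b e ->
  (forall v, incident hvert hedge endsH v e -> v = a \/ v = b) ->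
  (forall c, W a c -> vf c = a) -> (forall c, W b c -> vf c = b) ->
  has_card (Ve T a b e) n -> has_card (Pe T e) n.
Proof.
  intros Ia Ib Iab Fa Fb. apply has_card_map with (fun c => (vf c, dot c, e)).
  - intros c [[Ha|Hb] HT]; simpl; (split; [auto|split; [|lra]]).
    + rewrite Fa; auto. apply reach_departs; auto. exists c; auto.
    + rewrite Fb; auto. apply reach_departs; auto. exists c; auto.
  - intros c c' _ _ E. inversion E. apply Inj; auto.
  - intros [[v s] e'] [-> [Hd HT]]. apply departs_reach in Hd. destruct Hd as [Hi [c [HW ->]]].
    exists c. destruct (Iab v Hi) as [->| ->].
    + rewrite Fa; auto. repeat split; auto; unfold dot; lra.
    + rewrite Fb; auto. repeat split; auto; unfold dot; lra.
Qed.


Definition p3 (c : vec) : nat := let '(c1, c2, c3, c4, c5) := c in c3.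
Definition p1 (c : vec) : nat := let '(c1, c2, c3, c4, c5) := c in c1.
Definition p2 (c : vec) : nat := let '(c1, c2, c3, c4, c5) := c in c2.
Definition p4 (c : vec) : nat := let '(c1, c2, c3, c4, c5) := c in c4.
Definition p5 (c : vec) : nat := let '(c1, c2, c3, c4, c5) := c in c5.

Definition g1a (c : vec) : list nat := let '(c1, c2, c3, c4, c5) := c in [c2 / 2; c3 / 2 - 1; c4 / 2; c5 / 2]%nat.

Lemma piece1a T : has_card (fun c => Ve T vA vL1 e1 c /\ (0 < p3 c)%nat)
   (lattice_count [2*t2; 2*t3; 2*t4; 2*t5] (T - 2 * t3)).
Proof.
  apply has_card_pull with (LC [2*t2; 2*t3; 2*t4; 2*t5] (T - 2 * t3)) g1a.
  - intros [[[[c1 c2] c3] c4] c5] [[HW HT] Hc]. unfold dot, len in HT. cbn [p1 p2 p3 p4 p5 dotv tlen] in *.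
    assert (c2 mod 2 = 0 /\ c3 mod 2 = 0 /\ 0 < c3 /\ c4 mod 2 = 0 /\ c5 mod 2 = 0)%nat by (destruct HW as [HW|HW]; cbn [W par] in HW; plia).
    unfold LC; cbn [g1a lin_comb length]. split; [auto|].
    assert (0 <= INR c1 * t1) by (apply Rmult_le_pos; [apply pos_INR|lra]).
    rewrite (INR_ev c2) in HT by plia. rewrite (INR_evp c3) in HT by plia. rewrite (INR_ev c4) in HT by plia. rewrite (INR_ev c5) in HT by plia.
    rewrite ?INR_0 in HT. lra.
  - intros [[[[c1 c2] c3] c4] c5] [[[[c1' c2'] c3'] c4'] c5'] [[HW HT] Hc] [[HW' HT'] Hc'] E.
    unfold dot, len in HT, HT'. cbn [p1 p2 p3 p4 p5 dotv tlen] in *. cbn [g1a] in E. injection E; intros;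
    repeat change (fst (Nat.divmod ?x 1 0 1)) with (Nat.div x 2) in *.
    assert (c2 mod 2 = 0 /\ c3 mod 2 = 0 /\ 0 < c3 /\ c4 mod 2 = 0 /\ c5 mod 2 = 0)%nat by (destruct HW as [HW|HW]; cbn [W par] in HW; plia).
    assert (c2' mod 2 = 0 /\ c3' mod 2 = 0 /\ 0 < c3' /\ c4' mod 2 = 0 /\ c5' mod 2 = 0)%nat by (destruct HW' as [HW'|HW']; cbn [W par] in HW'; plia).
    assert (c2 = c2' /\ c3 = c3' /\ c4 = c4' /\ c5 = c5')%nat as [-> [-> [-> ->]]] by plia.
    assert (c1 = c1') as ->; auto.
    apply (window_unique t1 T (INR c2' * t2+INR c3' * t3+INR c4' * t4+INR c5' * t5) c1 c1'); auto; lra.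
  - intros [|a [|b [|c [|d [|]]]]] [Hl Hc]; cbn [length] in Hl; try discriminate.
    cbn [lin_comb] in Hc.
    destruct (window_exists t1 T (INR (2 * a) * t2 + INR (2 * b + 2) * t3 + INR (2 * c) * t4 + INR (2 * d) * t5)) as [j [Hj1 Hj2]]; auto.
    { rewrite ?plus_INR, ?mult_INR. simpl INR. lra. }
    exists (j, 2 * a, 2 * b + 2, 2 * c, 2 * d)%nat. split; [split; [split|]|].
    + destruct (Nat.eq_dec (j mod 2) 0); [left|right]; cbn [W par]; plia.
    + unfold dot, len; cbn [dotv tlen]; rewrite ?plus_INR, ?mult_INR in *; simpl INR in *; lra.
    + cbn [p1 p2 p3 p4 p5]; lia.
    + cbn [g1a]. repeat f_equal; plia.
  - apply lc_card. repeat constructor; lra.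
Qed.

Definition g1b (c : vec) : list nat := let '(c1, c2, c3, c4, c5) := c in [c2 / 2]%nat.

Lemma piece1b T : has_card (fun c => Ve T vA vL1 e1 c /\ (p3 c = 0)%nat)
   (lattice_count [2*t2] T).
Proof.
  apply has_card_pull with (LC [2*t2] T) g1b.
  - intros [[[[c1 c2] c3] c4] c5] [[HW HT] Hc]. unfold dot, len in HT. cbn [p1 p2 p3 p4 p5 dotv tlen] in *.
    assert (c2 mod 2 = 0 /\ c3 = 0 /\ c4 = 0 /\ c5 = 0)%nat by (destruct HW as [HW|HW]; cbn [W par] in HW; plia).
    unfold LC; cbn [g1b lin_comb length]. split; [auto|].
    assert (0 <= INR c1 * t1) by (apply Rmult_le_pos; [apply pos_INR|lra]).
    rewrite (INR_ev c2) in HT by plia. replace c3 with 0%nat in HT by plia. replace c4 with 0%nat in HT by plia. replace c5 with 0%nat in HT by plia.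
    rewrite ?INR_0 in HT. lra.
  - intros [[[[c1 c2] c3] c4] c5] [[[[c1' c2'] c3'] c4'] c5'] [[HW HT] Hc] [[HW' HT'] Hc'] E.
    unfold dot, len in HT, HT'. cbn [p1 p2 p3 p4 p5 dotv tlen] in *. cbn [g1b] in E. injection E; intros;
    repeat change (fst (Nat.divmod ?x 1 0 1)) with (Nat.div x 2) in *.
    assert (c2 mod 2 = 0 /\ c3 = 0 /\ c4 = 0 /\ c5 = 0)%nat by (destruct HW as [HW|HW]; cbn [W par] in HW; plia).
    assert (c2' mod 2 = 0 /\ c3' = 0 /\ c4' = 0 /\ c5' = 0)%nat by (destruct HW' as [HW'|HW']; cbn [W par] in HW'; plia).
    assert (c2 = c2' /\ c3 = c3' /\ c4 = c4' /\ c5 = c5')%nat as [-> [-> [-> ->]]] by plia.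
    assert (c1 = c1') as ->; auto.
    apply (window_unique t1 T (INR c2' * t2+INR c3' * t3+INR c4' * t4+INR c5' * t5) c1 c1'); auto; lra.
  - intros [|a [|]] [Hl Hc]; cbn [length] in Hl; try discriminate.
    cbn [lin_comb] in Hc.
    destruct (window_exists t1 T (INR (2 * a) * t2 + INR (0) * t3 + INR (0) * t4 + INR (0) * t5)) as [j [Hj1 Hj2]]; auto.
    { rewrite ?plus_INR, ?mult_INR. simpl INR. lra. }
    exists (j, 2 * a, 0, 0, 0)%nat. split; [split; [split|]|].
    + destruct (Nat.eq_dec (j mod 2) 0); [left|right]; cbn [W par]; plia.
    + unfold dot, len; cbn [dotv tlen]; rewrite ?plus_INR, ?mult_INR in *; simpl INR in *; lra.
    + cbn [p1 p2 p3 p4 p5]; lia.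
    + cbn [g1b]. repeat f_equal; plia.
  - apply lc_card. repeat constructor; lra.
Qed.

Definition g2a (c : vec) : list nat := let '(c1, c2, c3, c4, c5) := c in [c1 / 2; c3 / 2 - 1; c4 / 2; c5 / 2]%nat.

Lemma piece2a T : has_card (fun c => Ve T vA vL2 e2 c /\ (0 < p3 c)%nat)
   (lattice_count [2*t1; 2*t3; 2*t4; 2*t5] (T - 2 * t3)).
Proof.
  apply has_card_pull with (LC [2*t1; 2*t3; 2*t4; 2*t5] (T - 2 * t3)) g2a.
  - intros [[[[c1 c2] c3] c4] c5] [[HW HT] Hc]. unfold dot, len in HT. cbn [p1 p2 p3 p4 p5 dotv tlen] in *.
    assert (c1 mod 2 = 0 /\ c3 mod 2 = 0 /\ 0 < c3 /\ c4 mod 2 = 0 /\ c5 mod 2 = 0)%nat by (destruct HW as [HW|HW]; cbn [W par] in HW; plia).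
    unfold LC; cbn [g2a lin_comb length]. split; [auto|].
    assert (0 <= INR c2 * t2) by (apply Rmult_le_pos; [apply pos_INR|lra]).
    rewrite (INR_ev c1) in HT by plia. rewrite (INR_evp c3) in HT by plia. rewrite (INR_ev c4) in HT by plia. rewrite (INR_ev c5) in HT by plia.
    rewrite ?INR_0 in HT. lra.
  - intros [[[[c1 c2] c3] c4] c5] [[[[c1' c2'] c3'] c4'] c5'] [[HW HT] Hc] [[HW' HT'] Hc'] E.
    unfold dot, len in HT, HT'. cbn [p1 p2 p3 p4 p5 dotv tlen] in *. cbn [g2a] in E. injection E; intros;
    repeat change (fst (Nat.divmod ?x 1 0 1)) with (Nat.div x 2) in *.
    assert (c1 mod 2 = 0 /\ c3 mod 2 = 0 /\ 0 < c3 /\ c4 mod 2 = 0 /\ c5 mod 2 = 0)%nat by (destruct HW as [HW|HW]; cbn [W par] in HW; plia).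
    assert (c1' mod 2 = 0 /\ c3' mod 2 = 0 /\ 0 < c3' /\ c4' mod 2 = 0 /\ c5' mod 2 = 0)%nat by (destruct HW' as [HW'|HW']; cbn [W par] in HW'; plia).
    assert (c1 = c1' /\ c3 = c3' /\ c4 = c4' /\ c5 = c5')%nat as [-> [-> [-> ->]]] by plia.
    assert (c2 = c2') as ->; auto.
    apply (window_unique t2 T (INR c1' * t1+INR c3' * t3+INR c4' * t4+INR c5' * t5) c2 c2'); auto; lra.
  - intros [|a [|b [|c [|d [|]]]]] [Hl Hc]; cbn [length] in Hl; try discriminate.
    cbn [lin_comb] in Hc.
    destruct (window_exists t2 T (INR (2 * a) * t1 + INR (2 * b + 2) * t3 + INR (2 * c) * t4 + INR (2 * d) * t5)) as [j [Hj1 Hj2]]; auto.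
    { rewrite ?plus_INR, ?mult_INR. simpl INR. lra. }
    exists (2 * a, j, 2 * b + 2, 2 * c, 2 * d)%nat. split; [split; [split|]|].
    + destruct (Nat.eq_dec (j mod 2) 0); [left|right]; cbn [W par]; plia.
    + unfold dot, len; cbn [dotv tlen]; rewrite ?plus_INR, ?mult_INR in *; simpl INR in *; lra.
    + cbn [p1 p2 p3 p4 p5]; lia.
    + cbn [g2a]. repeat f_equal; plia.
  - apply lc_card. repeat constructor; lra.
Qed.

Definition g2b (c : vec) : list nat := let '(c1, c2, c3, c4, c5) := c in [c1 / 2]%nat.

Lemma piece2b T : has_card (fun c => Ve T vA vL2 e2 c /\ (p3 c = 0)%nat)
   (lattice_count [2*t1] T).
Proof.
  apply has_card_pull with (LC [2*t1] T) g2b.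
  - intros [[[[c1 c2] c3] c4] c5] [[HW HT] Hc]. unfold dot, len in HT. cbn [p1 p2 p3 p4 p5 dotv tlen] in *.
    assert (c1 mod 2 = 0 /\ c3 = 0 /\ c4 = 0 /\ c5 = 0)%nat by (destruct HW as [HW|HW]; cbn [W par] in HW; plia).
    unfold LC; cbn [g2b lin_comb length]. split; [auto|].
    assert (0 <= INR c2 * t2) by (apply Rmult_le_pos; [apply pos_INR|lra]).
    rewrite (INR_ev c1) in HT by plia. replace c3 with 0%nat in HT by plia. replace c4 with 0%nat in HT by plia. replace c5 with 0%nat in HT by plia.
    rewrite ?INR_0 in HT. lra.
  - intros [[[[c1 c2] c3] c4] c5] [[[[c1' c2'] c3'] c4'] c5'] [[HW HT] Hc] [[HW' HT'] Hc'] E.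
    unfold dot, len in HT, HT'. cbn [p1 p2 p3 p4 p5 dotv tlen] in *. cbn [g2b] in E. injection E; intros;
    repeat change (fst (Nat.divmod ?x 1 0 1)) with (Nat.div x 2) in *.
    assert (c1 mod 2 = 0 /\ c3 = 0 /\ c4 = 0 /\ c5 = 0)%nat by (destruct HW as [HW|HW]; cbn [W par] in HW; plia).
    assert (c1' mod 2 = 0 /\ c3' = 0 /\ c4' = 0 /\ c5' = 0)%nat by (destruct HW' as [HW'|HW']; cbn [W par] in HW'; plia).
    assert (c1 = c1' /\ c3 = c3' /\ c4 = c4' /\ c5 = c5')%nat as [-> [-> [-> ->]]] by plia.
    assert (c2 = c2') as ->; auto.
    apply (window_unique t2 T (INR c1' * t1+INR c3' * t3+INR c4' * t4+INR c5' * t5) c2 c2'); auto; lra.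
  - intros [|a [|]] [Hl Hc]; cbn [length] in Hl; try discriminate.
    cbn [lin_comb] in Hc.
    destruct (window_exists t2 T (INR (2 * a) * t1 + INR (0) * t3 + INR (0) * t4 + INR (0) * t5)) as [j [Hj1 Hj2]]; auto.
    { rewrite ?plus_INR, ?mult_INR. simpl INR. lra. }
    exists (2 * a, j, 0, 0, 0)%nat. split; [split; [split|]|].
    + destruct (Nat.eq_dec (j mod 2) 0); [left|right]; cbn [W par]; plia.
    + unfold dot, len; cbn [dotv tlen]; rewrite ?plus_INR, ?mult_INR in *; simpl INR in *; lra.
    + cbn [p1 p2 p3 p4 p5]; lia.
    + cbn [g2b]. repeat f_equal; plia.
  - apply lc_card. repeat constructor; lra.
Qed.

Definition g3a (c : vec) : list nat := let '(c1, c2, c3, c4, c5) := c in [c1 / 2; c2 / 2; c4 / 2 - 1; c5 / 2]%nat.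

Lemma piece3a T : has_card (fun c => Ve T vA vB e3 c /\ (0 < p4 c)%nat)
   (lattice_count [2*t1; 2*t2; 2*t4; 2*t5] (T - t3 - 2 * t4)).
Proof.
  apply has_card_pull with (LC [2*t1; 2*t2; 2*t4; 2*t5] (T - t3 - 2 * t4)) g3a.
  - intros [[[[c1 c2] c3] c4] c5] [[HW HT] Hc]. unfold dot, len in HT. cbn [p1 p2 p3 p4 p5 dotv tlen] in *.
    assert (c1 mod 2 = 0 /\ c2 mod 2 = 0 /\ c4 mod 2 = 0 /\ 0 < c4 /\ c5 mod 2 = 0)%nat by (destruct HW as [HW|HW]; cbn [W par] in HW; plia).
    unfold LC; cbn [g3a lin_comb length]. split; [auto|].
    assert (Hfree : (1 <= c3)%nat) by (destruct HW as [HW|HW]; cbn [W par] in HW; plia).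
    assert (t3 <= INR c3 * t3) by (apply le_INR in Hfree; simpl in Hfree; nra).
    rewrite (INR_ev c1) in HT by plia. rewrite (INR_ev c2) in HT by plia. rewrite (INR_evp c4) in HT by plia. rewrite (INR_ev c5) in HT by plia.
    rewrite ?INR_0 in HT. lra.
  - intros [[[[c1 c2] c3] c4] c5] [[[[c1' c2'] c3'] c4'] c5'] [[HW HT] Hc] [[HW' HT'] Hc'] E.
    unfold dot, len in HT, HT'. cbn [p1 p2 p3 p4 p5 dotv tlen] in *. cbn [g3a] in E. injection E; intros;
    repeat change (fst (Nat.divmod ?x 1 0 1)) with (Nat.div x 2) in *.
    assert (c1 mod 2 = 0 /\ c2 mod 2 = 0 /\ c4 mod 2 = 0 /\ 0 < c4 /\ c5 mod 2 = 0)%nat by (destruct HW as [HW|HW]; cbn [W par] in HW; plia).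
    assert (c1' mod 2 = 0 /\ c2' mod 2 = 0 /\ c4' mod 2 = 0 /\ 0 < c4' /\ c5' mod 2 = 0)%nat by (destruct HW' as [HW'|HW']; cbn [W par] in HW'; plia).
    assert (c1 = c1' /\ c2 = c2' /\ c4 = c4' /\ c5 = c5')%nat as [-> [-> [-> ->]]] by plia.
    assert (c3 = c3') as ->; auto.
    apply (window_unique t3 T (INR c1' * t1+INR c2' * t2+INR c4' * t4+INR c5' * t5) c3 c3'); auto; lra.
  - intros [|a [|b [|c [|d [|]]]]] [Hl Hc]; cbn [length] in Hl; try discriminate.
    cbn [lin_comb] in Hc.
    destruct (window_exists t3 T (INR (2 * a) * t1 + INR (2 * b) * t2 + INR (2 * c + 2) * t4 + INR (2 * d) * t5)) as [j [Hj1 Hj2]]; auto.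
    { rewrite ?plus_INR, ?mult_INR. simpl INR. lra. }
    assert (0 < j)%nat by (destruct j; [rewrite ?plus_INR, ?mult_INR in Hj1; simpl INR in Hj1; lra|lia]).
    exists (2 * a, 2 * b, j, 2 * c + 2, 2 * d)%nat. split; [split; [split|]|].
    + destruct (Nat.eq_dec (j mod 2) 0); [left|right]; cbn [W par]; plia.
    + unfold dot, len; cbn [dotv tlen]; rewrite ?plus_INR, ?mult_INR in *; simpl INR in *; lra.
    + cbn [p1 p2 p3 p4 p5]; lia.
    + cbn [g3a]. repeat f_equal; plia.
  - apply lc_card. repeat constructor; lra.
Qed.

Definition g3b (c : vec) : list nat := let '(c1, c2, c3, c4, c5) := c in [c1 / 2; c2 / 2; c5 / 2 - 1]%nat.

Lemma piece3b T : has_card (fun c => Ve T vA vB e3 c /\ (p4 c = 0 /\ 0 < p5 c)%nat)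
   (lattice_count [2*t1; 2*t2; 2*t5] (T - t3 - 2 * t5)).
Proof.
  apply has_card_pull with (LC [2*t1; 2*t2; 2*t5] (T - t3 - 2 * t5)) g3b.
  - intros [[[[c1 c2] c3] c4] c5] [[HW HT] Hc]. unfold dot, len in HT. cbn [p1 p2 p3 p4 p5 dotv tlen] in *.
    assert (c1 mod 2 = 0 /\ c2 mod 2 = 0 /\ c4 = 0 /\ c5 mod 2 = 0 /\ 0 < c5)%nat by (destruct HW as [HW|HW]; cbn [W par] in HW; plia).
    unfold LC; cbn [g3b lin_comb length]. split; [auto|].
    assert (Hfree : (1 <= c3)%nat) by (destruct HW as [HW|HW]; cbn [W par] in HW; plia).
    assert (t3 <= INR c3 * t3) by (apply le_INR in Hfree; simpl in Hfree; nra).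
    rewrite (INR_ev c1) in HT by plia. rewrite (INR_ev c2) in HT by plia. replace c4 with 0%nat in HT by plia. rewrite (INR_evp c5) in HT by plia.
    rewrite ?INR_0 in HT. lra.
  - intros [[[[c1 c2] c3] c4] c5] [[[[c1' c2'] c3'] c4'] c5'] [[HW HT] Hc] [[HW' HT'] Hc'] E.
    unfold dot, len in HT, HT'. cbn [p1 p2 p3 p4 p5 dotv tlen] in *. cbn [g3b] in E. injection E; intros;
    repeat change (fst (Nat.divmod ?x 1 0 1)) with (Nat.div x 2) in *.
    assert (c1 mod 2 = 0 /\ c2 mod 2 = 0 /\ c4 = 0 /\ c5 mod 2 = 0 /\ 0 < c5)%nat by (destruct HW as [HW|HW]; cbn [W par] in HW; plia).
    assert (c1' mod 2 = 0 /\ c2' mod 2 = 0 /\ c4' = 0 /\ c5' mod 2 = 0 /\ 0 < c5')%nat by (destruct HW' as [HW'|HW']; cbn [W par] in HW'; plia).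
    assert (c1 = c1' /\ c2 = c2' /\ c4 = c4' /\ c5 = c5')%nat as [-> [-> [-> ->]]] by plia.
    assert (c3 = c3') as ->; auto.
    apply (window_unique t3 T (INR c1' * t1+INR c2' * t2+INR c4' * t4+INR c5' * t5) c3 c3'); auto; lra.
  - intros [|a [|b [|c [|]]]] [Hl Hc]; cbn [length] in Hl; try discriminate.
    cbn [lin_comb] in Hc.
    destruct (window_exists t3 T (INR (2 * a) * t1 + INR (2 * b) * t2 + INR (0) * t4 + INR (2 * c + 2) * t5)) as [j [Hj1 Hj2]]; auto.
    { rewrite ?plus_INR, ?mult_INR. simpl INR. lra. }
    assert (0 < j)%nat by (destruct j; [rewrite ?plus_INR, ?mult_INR in Hj1; simpl INR in Hj1; lra|lia]).
    exists (2 * a, 2 * b, j, 0, 2 * c + 2)%nat. split; [split; [split|]|].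
    + destruct (Nat.eq_dec (j mod 2) 0); [left|right]; cbn [W par]; plia.
    + unfold dot, len; cbn [dotv tlen]; rewrite ?plus_INR, ?mult_INR in *; simpl INR in *; lra.
    + cbn [p1 p2 p3 p4 p5]; lia.
    + cbn [g3b]. repeat f_equal; plia.
  - apply lc_card. repeat constructor; lra.
Qed.

Definition g3c (c : vec) : list nat := let '(c1, c2, c3, c4, c5) := c in [c1 / 2; c2 / 2]%nat.

Lemma piece3c T : has_card (fun c => Ve T vA vB e3 c /\ (p4 c = 0 /\ p5 c = 0)%nat)
   (lattice_count [2*t1; 2*t2] T).
Proof.
  apply has_card_pull with (LC [2*t1; 2*t2] T) g3c.
  - intros [[[[c1 c2] c3] c4] c5] [[HW HT] Hc]. unfold dot, len in HT. cbn [p1 p2 p3 p4 p5 dotv tlen] in *.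
    assert (c1 mod 2 = 0 /\ c2 mod 2 = 0 /\ c4 = 0 /\ c5 = 0)%nat by (destruct HW as [HW|HW]; cbn [W par] in HW; plia).
    unfold LC; cbn [g3c lin_comb length]. split; [auto|].
    assert (0 <= INR c3 * t3) by (apply Rmult_le_pos; [apply pos_INR|lra]).
    rewrite (INR_ev c1) in HT by plia. rewrite (INR_ev c2) in HT by plia. replace c4 with 0%nat in HT by plia. replace c5 with 0%nat in HT by plia.
    rewrite ?INR_0 in HT. lra.
  - intros [[[[c1 c2] c3] c4] c5] [[[[c1' c2'] c3'] c4'] c5'] [[HW HT] Hc] [[HW' HT'] Hc'] E.
    unfold dot, len in HT, HT'. cbn [p1 p2 p3 p4 p5 dotv tlen] in *. cbn [g3c] in E. injection E; intros;
    repeat change (fst (Nat.divmod ?x 1 0 1)) with (Nat.div x 2) in *.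
    assert (c1 mod 2 = 0 /\ c2 mod 2 = 0 /\ c4 = 0 /\ c5 = 0)%nat by (destruct HW as [HW|HW]; cbn [W par] in HW; plia).
    assert (c1' mod 2 = 0 /\ c2' mod 2 = 0 /\ c4' = 0 /\ c5' = 0)%nat by (destruct HW' as [HW'|HW']; cbn [W par] in HW'; plia).
    assert (c1 = c1' /\ c2 = c2' /\ c4 = c4' /\ c5 = c5')%nat as [-> [-> [-> ->]]] by plia.
    assert (c3 = c3') as ->; auto.
    apply (window_unique t3 T (INR c1' * t1+INR c2' * t2+INR c4' * t4+INR c5' * t5) c3 c3'); auto; lra.
  - intros [|a [|b [|]]] [Hl Hc]; cbn [length] in Hl; try discriminate.
    cbn [lin_comb] in Hc.
    destruct (window_exists t3 T (INR (2 * a) * t1 + INR (2 * b) * t2 + INR (0) * t4 + INR (0) * t5)) as [j [Hj1 Hj2]]; auto.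
    { rewrite ?plus_INR, ?mult_INR. simpl INR. lra. }
    exists (2 * a, 2 * b, j, 0, 0)%nat. split; [split; [split|]|].
    + destruct (Nat.eq_dec (j mod 2) 0); [left|right]; cbn [W par]; plia.
    + unfold dot, len; cbn [dotv tlen]; rewrite ?plus_INR, ?mult_INR in *; simpl INR in *; lra.
    + cbn [p1 p2 p3 p4 p5]; lia.
    + cbn [g3c]. repeat f_equal; plia.
  - apply lc_card. repeat constructor; lra.
Qed.

Definition g4 (c : vec) : list nat := let '(c1, c2, c3, c4, c5) := c in [c1 / 2; c2 / 2; c3 / 2; c5 / 2]%nat.

Lemma piece4 T : has_card (fun c => Ve T vB vL4 e4 c /\ True)
   (lattice_count [2*t1; 2*t2; 2*t3; 2*t5] (T - t3)).
Proof.
  apply has_card_pull with (LC [2*t1; 2*t2; 2*t3; 2*t5] (T - t3)) g4.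
  - intros [[[[c1 c2] c3] c4] c5] [[HW HT] Hc]. unfold dot, len in HT. cbn [p1 p2 p3 p4 p5 dotv tlen] in *.
    assert (c1 mod 2 = 0 /\ c2 mod 2 = 0 /\ c3 mod 2 = 1 /\ c5 mod 2 = 0)%nat by (destruct HW as [HW|HW]; cbn [W par] in HW; plia).
    unfold LC; cbn [g4 lin_comb length]. split; [auto|].
    assert (0 <= INR c4 * t4) by (apply Rmult_le_pos; [apply pos_INR|lra]).
    rewrite (INR_ev c1) in HT by plia. rewrite (INR_ev c2) in HT by plia. rewrite (INR_od c3) in HT by plia. rewrite (INR_ev c5) in HT by plia.
    rewrite ?INR_0 in HT. lra.
  - intros [[[[c1 c2] c3] c4] c5] [[[[c1' c2'] c3'] c4'] c5'] [[HW HT] Hc] [[HW' HT'] Hc'] E.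
    unfold dot, len in HT, HT'. cbn [p1 p2 p3 p4 p5 dotv tlen] in *. cbn [g4] in E. injection E; intros;
    repeat change (fst (Nat.divmod ?x 1 0 1)) with (Nat.div x 2) in *.
    assert (c1 mod 2 = 0 /\ c2 mod 2 = 0 /\ c3 mod 2 = 1 /\ c5 mod 2 = 0)%nat by (destruct HW as [HW|HW]; cbn [W par] in HW; plia).
    assert (c1' mod 2 = 0 /\ c2' mod 2 = 0 /\ c3' mod 2 = 1 /\ c5' mod 2 = 0)%nat by (destruct HW' as [HW'|HW']; cbn [W par] in HW'; plia).
    assert (c1 = c1' /\ c2 = c2' /\ c3 = c3' /\ c5 = c5')%nat as [-> [-> [-> ->]]] by plia.
    assert (c4 = c4') as ->; auto.
    apply (window_unique t4 T (INR c1' * t1+INR c2' * t2+INR c3' * t3+INR c5' * t5) c4 c4'); auto; lra.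
  - intros [|a [|b [|c [|d [|]]]]] [Hl Hc]; cbn [length] in Hl; try discriminate.
    cbn [lin_comb] in Hc.
    destruct (window_exists t4 T (INR (2 * a) * t1 + INR (2 * b) * t2 + INR (2 * c + 1) * t3 + INR (2 * d) * t5)) as [j [Hj1 Hj2]]; auto.
    { rewrite ?plus_INR, ?mult_INR. simpl INR. lra. }
    exists (2 * a, 2 * b, 2 * c + 1, j, 2 * d)%nat. split; [split; [split|]|].
    + destruct (Nat.eq_dec (j mod 2) 0); [left|right]; cbn [W par]; plia.
    + unfold dot, len; cbn [dotv tlen]; rewrite ?plus_INR, ?mult_INR in *; simpl INR in *; lra.
    + exact I.
    + cbn [g4]. repeat f_equal; plia.
  - apply lc_card. repeat constructor; lra.
Qed.

Definition g5 (c : vec) : list nat := let '(c1, c2, c3, c4, c5) := c in [c1 / 2; c2 / 2; c3 / 2; c4 / 2]%nat.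

Lemma piece5 T : has_card (fun c => Ve T vB vL5 e5 c /\ True)
   (lattice_count [2*t1; 2*t2; 2*t3; 2*t4] (T - t3)).
Proof.
  apply has_card_pull with (LC [2*t1; 2*t2; 2*t3; 2*t4] (T - t3)) g5.
  - intros [[[[c1 c2] c3] c4] c5] [[HW HT] Hc]. unfold dot, len in HT. cbn [p1 p2 p3 p4 p5 dotv tlen] in *.
    assert (c1 mod 2 = 0 /\ c2 mod 2 = 0 /\ c3 mod 2 = 1 /\ c4 mod 2 = 0)%nat by (destruct HW as [HW|HW]; cbn [W par] in HW; plia).
    unfold LC; cbn [g5 lin_comb length]. split; [auto|].
    assert (0 <= INR c5 * t5) by (apply Rmult_le_pos; [apply pos_INR|lra]).
    rewrite (INR_ev c1) in HT by plia. rewrite (INR_ev c2) in HT by plia. rewrite (INR_od c3) in HT by plia. rewrite (INR_ev c4) in HT by plia.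
    rewrite ?INR_0 in HT. lra.
  - intros [[[[c1 c2] c3] c4] c5] [[[[c1' c2'] c3'] c4'] c5'] [[HW HT] Hc] [[HW' HT'] Hc'] E.
    unfold dot, len in HT, HT'. cbn [p1 p2 p3 p4 p5 dotv tlen] in *. cbn [g5] in E. injection E; intros;
    repeat change (fst (Nat.divmod ?x 1 0 1)) with (Nat.div x 2) in *.
    assert (c1 mod 2 = 0 /\ c2 mod 2 = 0 /\ c3 mod 2 = 1 /\ c4 mod 2 = 0)%nat by (destruct HW as [HW|HW]; cbn [W par] in HW; plia).
    assert (c1' mod 2 = 0 /\ c2' mod 2 = 0 /\ c3' mod 2 = 1 /\ c4' mod 2 = 0)%nat by (destruct HW' as [HW'|HW']; cbn [W par] in HW'; plia).
    assert (c1 = c1' /\ c2 = c2' /\ c3 = c3' /\ c4 = c4')%nat as [-> [-> [-> ->]]] by plia.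
    assert (c5 = c5') as ->; auto.
    apply (window_unique t5 T (INR c1' * t1+INR c2' * t2+INR c3' * t3+INR c4' * t4) c5 c5'); auto; lra.
  - intros [|a [|b [|c [|d [|]]]]] [Hl Hc]; cbn [length] in Hl; try discriminate.
    cbn [lin_comb] in Hc.
    destruct (window_exists t5 T (INR (2 * a) * t1 + INR (2 * b) * t2 + INR (2 * c + 1) * t3 + INR (2 * d) * t4)) as [j [Hj1 Hj2]]; auto.
    { rewrite ?plus_INR, ?mult_INR. simpl INR. lra. }
    exists (2 * a, 2 * b, 2 * c + 1, 2 * d, j)%nat. split; [split; [split|]|].
    + destruct (Nat.eq_dec (j mod 2) 0); [left|right]; cbn [W par]; plia.
    + unfold dot, len; cbn [dotv tlen]; rewrite ?plus_INR, ?mult_INR in *; simpl INR in *; lra.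
    + exact I.
    + cbn [g5]. repeat f_equal; plia.
  - apply lc_card. repeat constructor; lra.
Qed.

End Count.


Definition NH (t1 t2 t3 t4 t5 T : R) : nat :=
  Nat.add (Nat.add (lattice_count [2*t2; 2*t3; 2*t4; 2*t5] (T - 2 * t3)) (lattice_count [2*t2] T))
  (Nat.add (Nat.add (lattice_count [2*t1; 2*t3; 2*t4; 2*t5] (T - 2 * t3)) (lattice_count [2*t1] T))
  (Nat.add (Nat.add (lattice_count [2*t1; 2*t2; 2*t4; 2*t5] (T - t3 - 2 * t4))
    (Nat.add (lattice_count [2*t1; 2*t2; 2*t5] (T - t3 - 2 * t5)) (lattice_count [2*t1; 2*t2] T)))
  (Nat.add (lattice_count [2*t1; 2*t2; 2*t3; 2*t5] (T - t3))
   (lattice_count [2*t1; 2*t2; 2*t3; 2*t4] (T - t3))))).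

Lemma vf_ev {X : Type} n (x y : X) : (n mod 2 = 0)%nat -> (if Nat.eqb (n mod 2) 0 then x else y) = x.
Proof. intros H; rewrite H; reflexivity. Qed.
Lemma vf_od {X : Type} n (x y : X) : (n mod 2 = 1)%nat -> (if Nat.eqb (n mod 2) 0 then x else y) = y.
Proof. intros H; rewrite H; reflexivity. Qed.

Section Tot.
Variables t1 t2 t3 t4 t5 : R.
Hypotheses (h1 : 0 < t1) (h2 : 0 < t2) (h3 : 0 < t3) (h4 : 0 < t4) (h5 : 0 < t5).
Hypothesis Inj : forall c c', dotv t1 t2 t3 t4 t5 c = dotv t1 t2 t3 t4 t5 c' -> c = c'.

Ltac inc_tac := unfold incident; simpl; auto.
Ltac inc2_tac := let v := fresh in let H := fresh in intros v H; unfold incident in H; destruct v; simpl in H; intuition discriminate.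

Lemma card_e1 T : has_card (Pe t1 t2 t3 t4 t5 T e1)
  (lattice_count [2*t2; 2*t3; 2*t4; 2*t5] (T - 2 * t3) + lattice_count [2*t2] T).
Proof.
  apply (edge_card t1 t2 t3 t4 t5 Inj T e1 vA vL1 (fun c => if Nat.eqb (p1 c mod 2) 0 then vA else vL1)); try inc_tac; try inc2_tac.
  - intros [[[[c1 c2] c3] c4] c5] HW; cbn [W par] in HW. apply (vf_ev c1); plia.
  - intros [[[[c1 c2] c3] c4] c5] HW; cbn [W par] in HW. apply (vf_od c1); plia.
  - eapply has_card_ext; [|apply has_card_or; [|apply (piece1a t1 t2 t3 t4 t5); auto|apply (piece1b t1 t2 t3 t4 t5); auto]]; auto.
    + intros c; cbv beta; split; [tauto|intros H; destruct (Nat.eq_dec (p3 c) 0); [right|left]; split; auto; lia].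
    + intros c; cbv beta; intros; intuition lia.
Qed.

Lemma card_e2 T : has_card (Pe t1 t2 t3 t4 t5 T e2)
  (lattice_count [2*t1; 2*t3; 2*t4; 2*t5] (T - 2 * t3) + lattice_count [2*t1] T).
Proof.
  apply (edge_card t1 t2 t3 t4 t5 Inj T e2 vA vL2 (fun c => if Nat.eqb (p2 c mod 2) 0 then vA else vL2)); try inc_tac; try inc2_tac.
  - intros [[[[c1 c2] c3] c4] c5] HW; cbn [W par] in HW. apply (vf_ev c2); plia.
  - intros [[[[c1 c2] c3] c4] c5] HW; cbn [W par] in HW. apply (vf_od c2); plia.
  - eapply has_card_ext; [|apply has_card_or; [|apply (piece2a t1 t2 t3 t4 t5); auto|apply (piece2b t1 t2 t3 t4 t5); auto]]; auto.
    + intros c; cbv beta; split; [tauto|intros H; destruct (Nat.eq_dec (p3 c) 0); [right|left]; split; auto; lia].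
    + intros c; cbv beta; intros; intuition lia.
Qed.

Lemma card_e3 T : has_card (Pe t1 t2 t3 t4 t5 T e3)
  (lattice_count [2*t1; 2*t2; 2*t4; 2*t5] (T - t3 - 2 * t4) +
    (lattice_count [2*t1; 2*t2; 2*t5] (T - t3 - 2 * t5) + lattice_count [2*t1; 2*t2] T)).
Proof.
  apply (edge_card t1 t2 t3 t4 t5 Inj T e3 vA vB (fun c => if Nat.eqb (p3 c mod 2) 0 then vA else vB)); try inc_tac; try inc2_tac.
  - intros [[[[c1 c2] c3] c4] c5] HW; cbn [W par] in HW. apply (vf_ev c3); plia.
  - intros [[[[c1 c2] c3] c4] c5] HW; cbn [W par] in HW. apply (vf_od c3); plia.
  - eapply has_card_ext; [|apply has_card_or; [|apply (piece3a t1 t2 t3 t4 t5); auto|apply has_card_or; [|apply (piece3b t1 t2 t3 t4 t5); auto|apply (piece3c t1 t2 t3 t4 t5); auto]]]; auto.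
    + intros c; cbv beta; split.
      * tauto.
      * intros H; destruct (Nat.eq_dec (p4 c) 0); [right; destruct (Nat.eq_dec (p5 c) 0); [right|left]|left]; split; auto; lia.
    + intros c; cbv beta; intros; intuition lia.
    + intros c; cbv beta; intros; intuition lia.
Qed.

Lemma card_e4 T : has_card (Pe t1 t2 t3 t4 t5 T e4) (lattice_count [2*t1; 2*t2; 2*t3; 2*t5] (T - t3)).
Proof.
  apply (edge_card t1 t2 t3 t4 t5 Inj T e4 vB vL4 (fun c => if Nat.eqb (p4 c mod 2) 0 then vB else vL4)); try inc_tac; try inc2_tac.
  - intros [[[[c1 c2] c3] c4] c5] HW; cbn [W par] in HW. apply (vf_ev c4); plia.
  - intros [[[[c1 c2] c3] c4] c5] HW; cbn [W par] in HW. apply (vf_od c4); plia.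
  - eapply has_card_ext; [|apply (piece4 t1 t2 t3 t4 t5); auto]. intros c; tauto.
Qed.

Lemma card_e5 T : has_card (Pe t1 t2 t3 t4 t5 T e5) (lattice_count [2*t1; 2*t2; 2*t3; 2*t4] (T - t3)).
Proof.
  apply (edge_card t1 t2 t3 t4 t5 Inj T e5 vB vL5 (fun c => if Nat.eqb (p5 c mod 2) 0 then vB else vL5)); try inc_tac; try inc2_tac.
  - intros [[[[c1 c2] c3] c4] c5] HW; cbn [W par] in HW. apply (vf_ev c5); plia.
  - intros [[[[c1 c2] c3] c4] c5] HW; cbn [W par] in HW. apply (vf_od c5); plia.
  - eapply has_card_ext; [|apply (piece5 t1 t2 t3 t4 t5); auto]. intros c; tauto.
Qed.

Definition PtsH (T : R) (x : hvert * R * hedge) : Prop :=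
  let (p, e) := x in let (v, s) := p in
  departs hvert hedge endsH (tlen t1 t2 t3 t4 t5) vA v s e /\ s <= T /\ T < s + tlen t1 t2 t3 t4 t5 e.

Lemma card_H T : has_card (PtsH T) (NH t1 t2 t3 t4 t5 T).
Proof.
  unfold NH. eapply has_card_ext; [|apply has_card_or; [|apply card_e1|apply has_card_or; [|apply card_e2|
     apply has_card_or; [|apply card_e3| apply has_card_or; [|apply card_e4|apply card_e5]]]]].
  - intros [[v s] e]; unfold Pe; simpl. destruct e; intuition discriminate.
  - intros [[v s] e]; unfold Pe; cbv beta; intros; intuition congruence.
  - intros [[v s] e]; unfold Pe; cbv beta; intros; intuition congruence.
  - intros [[v s] e]; unfold Pe; cbv beta; intros; intuition congruence.
  - intros [[v s] e]; unfold Pe; cbv beta; intros; intuition congruence.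
Qed.

Lemma Npoints_H T : Npoints hvert hedge endsH (tlen t1 t2 t3 t4 t5) vA T = NH t1 t2 t3 t4 t5 T.
Proof. apply fin_card_has. apply card_H. Qed.

End Tot.


Definition phi (v : hvert) : hvert := match v with vL1 => vL5 | vL5 => vL1 | w => w end.
Definition psi (e : hedge) : hedge := match e with e1 => e5 | e5 => e1 | f => f end.

Lemma phi_inv v : phi (phi v) = v. Proof. destruct v; reflexivity. Qed.
Lemma psi_inv e : psi (psi e) = e. Proof. destruct e; reflexivity. Qed.

Lemma inc_iso v e : incident hvert hedge endsH' v e <-> incident hvert hedge endsH (phi v) (psi e).
Proof. unfold incident; destruct v, e; simpl; intuition discriminate. Qed.

Lemma joins_iso e v w : joins hvert hedge endsH' e v w <-> joins hvert hedge endsH (psi e) (phi v) (phi w).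
Proof. unfold joins; destruct v, w, e; simpl; intuition discriminate. Qed.

Section Iso.
Variables t1 t2 t3 t4 t5 : R.

Lemma len_iso e : tlen t1 t2 t3 t4 t5 e = tlen t5 t2 t3 t4 t1 (psi e).
Proof. destruct e; reflexivity. Qed.

Lemma iso_fwd v s e : departs hvert hedge endsH' (tlen t1 t2 t3 t4 t5) vA v s e ->
  departs hvert hedge endsH (tlen t5 t2 t3 t4 t1) vA (phi v) s (psi e).
Proof.
  induction 1 as [e Hi|v s e w e' Hd IH Hj Hi].
  - apply dep_start. apply inc_iso in Hi. exact Hi.
  - rewrite len_iso. apply dep_next with (phi v); auto.
    + apply joins_iso; auto.
    + apply inc_iso; auto.
Qed.

Lemma iso_bwd v s e : departs hvert hedge endsH (tlen t5 t2 t3 t4 t1) vA v s e ->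
  departs hvert hedge endsH' (tlen t1 t2 t3 t4 t5) vA (phi v) s (psi e).
Proof.
  induction 1 as [e Hi|v s e w e' Hd IH Hj Hi].
  - apply dep_start. apply inc_iso. rewrite psi_inv. exact Hi.
  - replace (tlen t5 t2 t3 t4 t1 e) with (tlen t1 t2 t3 t4 t5 (psi e)) by (destruct e; reflexivity).
    apply dep_next with (phi v); auto.
    + apply joins_iso. rewrite !phi_inv, psi_inv; auto.
    + apply inc_iso. rewrite phi_inv, psi_inv; auto.
Qed.

Hypotheses (h1 : 0 < t1) (h2 : 0 < t2) (h3 : 0 < t3) (h4 : 0 < t4) (h5 : 0 < t5).
Hypothesis Inj : forall c c', dotv t5 t2 t3 t4 t1 c = dotv t5 t2 t3 t4 t1 c' -> c = c'.

Lemma Npoints_H' T : Npoints hvert hedge endsH' (tlen t1 t2 t3 t4 t5) vA T = NH t5 t2 t3 t4 t1 T.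
Proof.
  apply fin_card_has.
  apply has_card_pull with (PtsH t5 t2 t3 t4 t1 T) (fun x => let '(v, s, e) := x in (phi v, s, psi e)).
  - intros [[v s] e] [Hd HT]. simpl. split; [apply iso_fwd; auto|]. rewrite <- len_iso; auto.
  - intros [[v s] e] [[v' s'] e'] _ _ E.
    assert (phi v = phi v' /\ s = s' /\ psi e = psi e') as [A [B C]] by (inversion E; auto).
    rewrite <- (phi_inv v), A, phi_inv, <- (psi_inv e), C, psi_inv, B; reflexivity.
  - intros [[v s] e] [Hd HT]. exists (phi v, s, psi e). simpl. rewrite phi_inv, psi_inv. split; auto.
    split; [|rewrite len_iso, psi_inv; auto]. rewrite <- (phi_inv v), <- (psi_inv e) in Hd.
    apply iso_bwd in Hd. rewrite !phi_inv, !psi_inv in Hd. auto.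
  - apply card_H; auto.
Qed.
End Iso.


Lemma lc_asym s a : allpos s -> 0 <= a -> forall n, length s = S n ->
  exists K, 0 <= K /\ forall T, a + sumR s + 1 <= T ->
   Rabs (INR (lattice_count s (T - a)) - T ^ (S n) / (INR (fact (S n)) * prodR s)) <= K * T ^ n.
Proof.
  intros Hs Ha n Hn. set (F := INR (fact (S n)) * prodR s).
  assert (HF : 0 < F) by (apply Rmult_lt_0_compat; [apply fact_pos|apply prodR_pos; auto]).
  set (sg := sumR s). assert (Hsg : 0 <= sg) by (apply sumR_nonneg; auto).
  exists ((INR (S n) * a + INR (S n) * sg * 2 ^ n) / F). split.
  { apply Rmult_le_pos; [|left; apply Rinv_0_lt_compat; auto].
    assert (0 <= INR (S n)) by apply pos_INR. assert (0 < 2 ^ n) by (apply pow_lt; lra).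
    apply Rplus_le_le_0_compat; repeat apply Rmult_le_pos; lra. }
  intros T HT.
  assert (HY : 0 <= T - a) by lra.
  pose proof (lc_lower s Hs (T - a) HY) as Hlo. pose proof (lc_upper s Hs (T - a) HY) as Hup.
  rewrite Hn in Hlo, Hup. fold F in Hlo, Hup. fold sg in Hup.
  assert (HTn : 0 <= T ^ n) by (apply pow_le; lra).
  assert (L1 : T ^ S n <= INR (S n) * a * T ^ n + (T - a) ^ S n) by (apply powA; lra).
  assert (U1 : (T - a + sg) ^ S n <= (T + sg) ^ S n) by (apply pow_incr; lra).
  assert (U2 : (T + sg) ^ S n <= INR (S n) * sg * (T + sg) ^ n + T ^ S n).
  { pose proof (powA n sg (T + sg) Hsg ltac:(lra)). replace (T + sg - sg) with T in H by ring. exact H. }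
  assert (U3 : (T + sg) ^ n <= 2 ^ n * T ^ n).
  { rewrite <- Rpow_mult_distr. apply pow_incr; lra. }
  assert (0 <= INR (S n)) by apply pos_INR.
  assert (U4 : INR (S n) * sg * (T + sg) ^ n <= INR (S n) * sg * (2 ^ n * T ^ n)).
  { apply Rmult_le_compat_l; [apply Rmult_le_pos|]; auto. }
  assert (Hu : 0 < / F) by (apply Rinv_0_lt_compat; auto).
  unfold Rdiv in *. set (u := / F) in *.
  assert (M1 : (T ^ S n - (T - a) ^ S n) * u <= (INR (S n) * a * T ^ n) * u) by (apply Rmult_le_compat_r; lra).
  assert (M2 : ((T + sg) ^ S n - T ^ S n) * u <= (INR (S n) * sg * (2 ^ n * T ^ n)) * u) by (apply Rmult_le_compat_r; lra).
  assert (M3 : (T - a + sg) ^ S n * u <= (T + sg) ^ S n * u) by (apply Rmult_le_compat_r; lra).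
  assert (M4 : 0 <= INR (S n) * sg * (2 ^ n * T ^ n) * u).
  { assert (0 < 2 ^ n) by (apply pow_lt; lra). repeat apply Rmult_le_pos; lra. }
  assert (M5 : 0 <= INR (S n) * a * T ^ n * u) by (repeat apply Rmult_le_pos; lra).
  apply Rabs_le. split; lra.
Qed.

Lemma quad_bound a b c u : 1 <= u -> Rabs (a * u ^ 2 + b * u + c) <= (Rabs a + Rabs b + Rabs c) * u ^ 2.
Proof.
  intros Hu.
  assert (H1 : Rabs (a * u ^ 2) = Rabs a * u ^ 2).
  { rewrite Rabs_mult, (Rabs_right (u ^ 2)); auto. apply Rle_ge, pow_le; lra. }
  assert (H2 : Rabs (b * u) = Rabs b * u) by (rewrite Rabs_mult, (Rabs_right u); lra).
  pose proof (Rabs_triang (a * u ^ 2 + b * u) c). pose proof (Rabs_triang (a * u ^ 2) (b * u)).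
  pose proof (Rabs_pos b). pose proof (Rabs_pos c).
  assert (u <= u ^ 2) by (simpl; nra). assert (1 <= u ^ 2) by (simpl; nra).
  assert (Rabs b * u <= Rabs b * u ^ 2) by (apply Rmult_le_compat_l; auto).
  assert (Rabs c * 1 <= Rabs c * u ^ 2) by (apply Rmult_le_compat_l; auto).
  lra.
Qed.

Lemma second_diff f P R d : asymp_4_3 f P R -> 0 < d ->
  forall eps, 0 < eps -> exists U, forall u, U <= u ->
  Rabs (f u - 2 * f (u - d) + f (u - 2 * d)) <= eps * u ^ 3.
Proof.
  intros Hf Hd eps Heps.
  destruct (Hf (eps / 8) ltac:(lra)) as [T0 HT0].
  set (al := P * 12 * d ^ 2).
  set (be := - P * 24 * d ^ 3 + R * 6 * d ^ 2).
  set (ga := P * 14 * d ^ 4 - R * 6 * d ^ 3).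
  set (M := Rabs al + Rabs be + Rabs ga).
  assert (HM : 0 <= M) by (unfold M; pose proof (Rabs_pos al); pose proof (Rabs_pos be); pose proof (Rabs_pos ga); lra).
  exists (Rmax (T0 + 2 * d) (Rmax 1 (2 * M / eps))). intros u Hu.
  assert (Hu1 : T0 + 2 * d <= u) by (eapply Rle_trans; [apply Rmax_l|apply Hu]).
  assert (Hu2 : 1 <= u) by (eapply Rle_trans; [|apply Hu]; eapply Rle_trans; [|apply Rmax_r]; apply Rmax_l).
  assert (Hu3 : 2 * M / eps <= u) by (eapply Rle_trans; [|apply Hu]; eapply Rle_trans; [|apply Rmax_r]; apply Rmax_r).
  set (e := fun v => f v - (P * v ^ 4 + R * v ^ 3)).
  assert (E : f u - 2 * f (u - d) + f (u - 2 * d) = (al * u ^ 2 + be * u + ga) + (e u - 2 * e (u - d) + e (u - 2 * d))).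
  { unfold e, al, be, ga. ring. }
  rewrite E.
  assert (Hc : forall v, T0 <= v -> v <= u -> Rabs (e v) <= eps / 8 * u ^ 3).
  { intros v Hv1 Hv2. unfold e. eapply Rle_trans; [apply HT0; auto|].
    apply Rmult_le_compat_l; [lra|]. destruct (Rle_dec 0 v).
    - apply pow_incr; lra.
    - assert (v ^ 3 <= 0) by (simpl; nra). assert (0 <= u ^ 3) by (apply pow_le; lra). lra. }
  pose proof (Hc u ltac:(lra) ltac:(lra)).
  pose proof (Hc (u - d) ltac:(lra) ltac:(lra)).
  pose proof (Hc (u - 2 * d) ltac:(lra) ltac:(lra)).
  pose proof (quad_bound al be ga u Hu2) as Q. fold M in Q.
  assert (Q2 : M * u ^ 2 <= eps / 2 * u ^ 3).
  { assert (M <= eps / 2 * u).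
    { apply (Rmult_le_compat_r (eps / 2)) in Hu3; [|lra].
      unfold Rdiv in Hu3. replace (2 * M * / eps * (eps * / 2)) with M in Hu3 by (field; lra). lra. }
    replace (eps / 2 * u ^ 3) with ((eps / 2 * u) * u ^ 2) by (simpl; ring).
    apply Rmult_le_compat_r; auto. apply pow_le; lra. }
  pose proof (Rabs_triang (al * u ^ 2 + be * u + ga) (e u - 2 * e (u - d) + e (u - 2 * d))).
  pose proof (Rabs_triang (e u - 2 * e (u - d)) (e (u - 2 * d))).
  pose proof (Rabs_triang (e u) (- (2 * e (u - d)))).
  replace (e u - 2 * e (u - d)) with (e u + - (2 * e (u - d))) in * by ring.
  rewrite Rabs_Ropp, Rabs_mult, (Rabs_right 2) in H4 by lra.
  lra.
Qed.


Ltac split_at x r :=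
  match r with
  | x :: ?l2 => constr:((@nil R, l2))
  | ?y :: ?rest => let p := split_at x rest in
                   match p with (?a, ?b) => constr:((y :: a, b)) end
  end.

Ltac perm_solve :=
  match goal with
  | |- Permutation [] [] => apply perm_nil
  | |- Permutation (?x :: ?l) ?r =>
      let p := split_at x r in
      match p with (?l1, ?l2) =>
        apply perm_trans with (x :: l1 ++ l2); [apply perm_skip; simpl; perm_solve | apply Permutation_middle]
      end
  end.

Goal forall a b c d : R, Permutation [a; b; c; d] [d; b; c; a].
Proof. intros. perm_solve. Qed.

Definition Neg (f : R -> R) : Prop := forall eps, 0 < eps -> exists U, forall T, U <= T -> Rabs (f T) <= eps * T ^ 3.
Definition Small (f : R -> R) : Prop := exists K T1, forall T, T1 <= T -> Rabs (f T) <= K * T ^ 2.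

Lemma small_neg f : Small f -> Neg f.
Proof.
  intros [K [T1 H]] eps Heps. exists (Rmax T1 (Rmax 1 (Rabs K / eps))). intros T HT.
  assert (H1 : T1 <= T) by (eapply Rle_trans; [apply Rmax_l|apply HT]).
  assert (H2 : 1 <= T) by (eapply Rle_trans; [|apply HT]; eapply Rle_trans; [|apply Rmax_r]; apply Rmax_l).
  assert (H3 : Rabs K / eps <= T) by (eapply Rle_trans; [|apply HT]; eapply Rle_trans; [|apply Rmax_r]; apply Rmax_r).
  eapply Rle_trans; [apply H; auto|].
  assert (Rabs K <= eps * T).
  { apply (Rmult_le_compat_r eps) in H3; [|lra]. unfold Rdiv in H3.
    rewrite Rmult_assoc, Rinv_l, Rmult_1_r in H3; lra. }
  assert (0 <= T ^ 2) by (apply pow_le; lra).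
  assert (K * T ^ 2 <= Rabs K * T ^ 2) by (apply Rmult_le_compat_r; auto; apply Rle_abs).
  assert (Rabs K * T ^ 2 <= (eps * T) * T ^ 2) by (apply Rmult_le_compat_r; auto).
  replace (eps * T ^ 3) with ((eps * T) * T ^ 2) by (simpl; ring). lra.
Qed.

Lemma neg_plus f g : Neg f -> Neg g -> Neg (fun T => f T + g T).
Proof.
  intros Hf Hg eps Heps. destruct (Hf (eps/2) ltac:(lra)) as [U1 H1]. destruct (Hg (eps/2) ltac:(lra)) as [U2 H2].
  exists (Rmax U1 U2). intros T HT.
  specialize (H1 T (Rle_trans _ _ _ (Rmax_l _ _) HT)). specialize (H2 T (Rle_trans _ _ _ (Rmax_r _ _) HT)).
  eapply Rle_trans; [apply Rabs_triang|]. lra.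
Qed.

Lemma neg_scale c f : Neg f -> Neg (fun T => c * f T).
Proof.
  intros Hf eps Heps. destruct (Hf (eps / (Rabs c + 1))) as [U H].
  { apply Rdiv_lt_0_compat; auto. pose proof (Rabs_pos c); lra. }
  exists (Rmax U 0). intros T HT. specialize (H T (Rle_trans _ _ _ (Rmax_l _ _) HT)).
  assert (0 <= T) by (eapply Rle_trans; [apply Rmax_r|apply HT]).
  assert (0 <= T ^ 3) by (apply pow_le; lra).
  rewrite Rabs_mult. pose proof (Rabs_pos c).
  eapply Rle_trans; [apply Rmult_le_compat_l; [apply Rabs_pos|apply H]|].
  unfold Rdiv. replace (Rabs c * (eps * / (Rabs c + 1) * T ^ 3)) with ((Rabs c / (Rabs c + 1)) * (eps * T ^ 3)) by (field; lra).
  rewrite <- (Rmult_1_l (eps * T ^ 3)) at 2. apply Rmult_le_compat_r; [apply Rmult_le_pos; lra|].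
  apply Rle_trans with ((Rabs c + 1) / (Rabs c + 1)); [|right; field; lra].
  unfold Rdiv; apply Rmult_le_compat_r; [left; apply Rinv_0_lt_compat; lra|lra].
Qed.

Lemma neg_ext f g : (forall T, f T = g T) -> Neg g -> Neg f.
Proof. intros E H eps Heps. destruct (H eps Heps) as [U HU]. exists U. intros T HT. rewrite E; auto. Qed.

Lemma small_lc_low s a n : allpos s -> 0 <= a -> length s = S n -> (n <= 1)%nat ->
  Small (fun T => INR (lattice_count s (T - a))).
Proof.
  intros Hs Ha Hn Hn1. destruct (lc_asym s a Hs Ha n Hn) as [K [HK H]].
  set (F := INR (fact (S n)) * prodR s).
  assert (HF : 0 < F) by (apply Rmult_lt_0_compat; [apply fact_pos|apply prodR_pos; auto]).
  exists (K + / F), (Rmax (a + sumR s + 1) 1). intros T HT.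
  assert (H1 : a + sumR s + 1 <= T) by (eapply Rle_trans; [apply Rmax_l|apply HT]).
  assert (H2 : 1 <= T) by (eapply Rle_trans; [apply Rmax_r|apply HT]).
  specialize (H T H1). fold F in H.
  assert (Tn : T ^ n <= T ^ 2) by (apply Rle_pow; auto; lia).
  assert (TSn : T ^ S n <= T ^ 2) by (apply Rle_pow; auto; lia).
  assert (0 <= T ^ S n) by (apply pow_le; lra).
  assert (0 <= INR (lattice_count s (T - a))) by apply pos_INR.
  rewrite Rabs_right by lra.
  pose proof (Rle_abs (INR (lattice_count s (T - a)) - T ^ S n / F)) as Hab.
  assert (K * T ^ n <= K * T ^ 2) by (apply Rmult_le_compat_l; auto).
  assert (T ^ S n / F <= / F * T ^ 2).
  { unfold Rdiv. rewrite Rmult_comm. apply Rmult_le_compat_l; auto. left; apply Rinv_0_lt_compat; auto. }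
  lra.
Qed.

Lemma small_lc3 s a : allpos s -> 0 <= a -> length s = 3%nat ->
  Small (fun T => INR (lattice_count s (T - a)) - T ^ 3 / (INR (fact 3) * prodR s)).
Proof.
  intros Hs Ha Hn. destruct (lc_asym s a Hs Ha 2 Hn) as [K [HK H]].
  exists K, (a + sumR s + 1). intros T HT. apply H; auto.
Qed.

Lemma neg_sd l P R d : allpos l -> asymp_4_3 (fun Y => INR (lattice_count l Y)) P R -> 0 < d ->
  Neg (fun T => INR (lattice_count (map (fun a => 2 * a) l) T)
               - 2 * INR (lattice_count (map (fun a => 2 * a) l) (T - d))
               + INR (lattice_count (map (fun a => 2 * a) l) (T - 2 * d))).
Proof.
  intros Hl Ha Hd eps Heps.
  destruct (second_diff _ P R (d / 2) Ha ltac:(lra) eps Heps) as [U HU].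
  exists (Rmax (2 * U) 0). intros T HT.
  assert (H1 : 2 * U <= T) by (eapply Rle_trans; [apply Rmax_l|apply HT]).
  assert (H2 : 0 <= T) by (eapply Rle_trans; [apply Rmax_r|apply HT]).
  rewrite !lc_scale2.
  replace ((T - d) / 2) with (T / 2 - d / 2) by field.
  replace ((T - 2 * d) / 2) with (T / 2 - 2 * (d / 2)) by field.
  eapply Rle_trans; [apply HU; lra|].
  apply Rmult_le_compat_l; [lra|]. replace (T / 2) with (T * / 2) by reflexivity.
  rewrite Rpow_mult_distr. assert (0 <= T ^ 3) by (apply pow_le; lra).
  assert ((/ 2) ^ 3 <= 1) by (simpl; lra). nra.
Qed.


Lemma Q2R_inject z : Q2R (inject_Z z) = IZR z.
Proof. unfold Q2R; simpl. rewrite Rinv_1; ring. Qed.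

Lemma inj_lin t1 t2 t3 t4 t5 :
  (forall q1 q2 q3 q4 q5 : Q,
      (Q2R q1 * t1 + Q2R q2 * t2 + Q2R q3 * t3 + Q2R q4 * t4 + Q2R q5 * t5 = 0)%R ->
      (q1 == 0 /\ q2 == 0 /\ q3 == 0 /\ q4 == 0 /\ q5 == 0)%Q) ->
  forall c c', dotv t1 t2 t3 t4 t5 c = dotv t1 t2 t3 t4 t5 c' -> c = c'.
Proof.
  intros HL [[[[c1 c2] c3] c4] c5] [[[[d1 d2] d3] d4] d5] E. cbn [dotv] in E.
  destruct (HL (inject_Z (Z.of_nat c1 - Z.of_nat d1)) (inject_Z (Z.of_nat c2 - Z.of_nat d2))
     (inject_Z (Z.of_nat c3 - Z.of_nat d3)) (inject_Z (Z.of_nat c4 - Z.of_nat d4))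
     (inject_Z (Z.of_nat c5 - Z.of_nat d5))) as [E1 [E2 [E3 [E4 E5]]]].
  { rewrite !Q2R_inject, !minus_IZR, <- !INR_IZR_INZ. lra. }
  unfold Qeq in *; simpl in *.
  assert (c1 = d1 /\ c2 = d2 /\ c3 = d3 /\ c4 = d4 /\ c5 = d5)%nat as [-> [-> [-> [-> ->]]]] by lia.
  reflexivity.
Qed.

Lemma inj_swap t1 t2 t3 t4 t5 :
  (forall c c', dotv t1 t2 t3 t4 t5 c = dotv t1 t2 t3 t4 t5 c' -> c = c') ->
  forall c c', dotv t5 t2 t3 t4 t1 c = dotv t5 t2 t3 t4 t1 c' -> c = c'.
Proof.
  intros H [[[[c1 c2] c3] c4] c5] [[[[d1 d2] d3] d4] d5] E.
  assert ((c5, c2, c3, c4, c1) = (d5, d2, d3, d4, d1))%nat as E'.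
  { apply H. cbn [dotv] in *. lra. }
  inversion E'; auto.
Qed.


Lemma lcP (s s' : list R) Y : Permutation s s' -> allpos s -> lattice_count s Y = lattice_count s' Y.
Proof. intros; apply lc_perm; auto. Qed.

Theorem mainTheorem5 (t1 t2 t3 t4 t5 : R) :
  0 < t1 -> 0 < t2 -> 0 < t3 -> 0 < t4 -> 0 < t5 ->
  Assumption1 t1 t2 t3 t4 t5 ->
  asymp_3
    (fun T => INR (Npoints hvert hedge endsH (tlen t1 t2 t3 t4 t5) vA T)
            - INR (Npoints hvert hedge endsH' (tlen t1 t2 t3 t4 t5) vA T))
    (- (1 / (96 * t2 * t4)) * (1 / t5 - 1 / t1)).
Proof.
  intros h1 h2 h3 h4 h5 [HL HAs].
  pose proof (inj_lin _ _ _ _ _ HL) as Inj.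
  pose proof (inj_swap _ _ _ _ _ Inj) as Inj'.
  destruct (HAs [1;2;3;4]%nat) as [P1 [R1 Hf1]].
  { repeat constructor; simpl; intuition lia. }
  { simpl; lia. }
  { intros i Hi; simpl in Hi; intuition lia. }
  destruct (HAs [0;1;2;3]%nat) as [P5 [R5 Hf5]].
  { repeat constructor; simpl; intuition lia. }
  { simpl; lia. }
  { intros i Hi; simpl in Hi; intuition lia. }
  simpl map in Hf1, Hf5.
  assert (Hp : forall l : list R, Forall (fun x => 0 < x) l -> allpos l) by auto.
  assert (AP : forall a b c d, 0 < a -> 0 < b -> 0 < c -> 0 < d -> allpos [a; b; c; d]).
  { intros; repeat constructor; auto. }
  assert (AP3 : forall a b c, 0 < a -> 0 < b -> 0 < c -> allpos [a; b; c]).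
  { intros; repeat constructor; auto. }
  set (A1 := fun Y => INR (lattice_count (map (fun a => 2 * a) [t2; t3; t4; t5]) Y)).
  set (A5 := fun Y => INR (lattice_count (map (fun a => 2 * a) [t1; t2; t3; t4]) Y)).
  set (c := - (1 / (96 * t2 * t4)) * (1 / t5 - 1 / t1)).
  change (Neg (fun T => INR (Npoints hvert hedge endsH (tlen t1 t2 t3 t4 t5) vA T)
            - INR (Npoints hvert hedge endsH' (tlen t1 t2 t3 t4 t5) vA T) - c * T ^ 3)).
  apply neg_ext with (fun T =>
      (1/2) * (A1 T - 2 * A1 (T - t3) + A1 (T - 2 * t3)) +
      ((- (1/2)) * (A5 T - 2 * A5 (T - t3) + A5 (T - 2 * t3)) +
      ((- (1/2)) * (INR (lattice_count [2*t2; 2*t4; 2*t5] (T - 0)) - T ^ 3 / (INR (fact 3) * prodR [2*t2; 2*t4; 2*t5])) +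
      ((1/2) * (INR (lattice_count [2*t1; 2*t2; 2*t4] (T - 0)) - T ^ 3 / (INR (fact 3) * prodR [2*t1; 2*t2; 2*t4])) +
      (INR (lattice_count [2*t1] (T - 0)) +
      ((-1) * INR (lattice_count [2*t5] (T - 0)) +
      ((INR (lattice_count [2*t1; 2*t2; 2*t5] (T - (t3 + 2 * t5))) - T ^ 3 / (INR (fact 3) * prodR [2*t1; 2*t2; 2*t5])) +
      ((-1) * (INR (lattice_count [2*t5; 2*t2; 2*t1] (T - (t3 + 2 * t1))) - T ^ 3 / (INR (fact 3) * prodR [2*t5; 2*t2; 2*t1])) +
      (INR (lattice_count [2*t1; 2*t2] (T - 0)) +
      (-1) * INR (lattice_count [2*t5; 2*t2] (T - 0))))))))))).
  - intros T. rewrite Npoints_H, Npoints_H'; auto.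
    unfold NH.
    rewrite (lcP [2*t2; 2*t3; 2*t4; 2*t1] [2*t1; 2*t2; 2*t3; 2*t4]) by (try perm_solve; apply AP; lra).
    rewrite (lcP [2*t5; 2*t3; 2*t4; 2*t1] [2*t1; 2*t3; 2*t4; 2*t5]) by (try perm_solve; apply AP; lra).
    rewrite (lcP [2*t5; 2*t2; 2*t4; 2*t1] [2*t1; 2*t2; 2*t4; 2*t5]) by (try perm_solve; apply AP; lra).
    rewrite (lcP [2*t5; 2*t2; 2*t3; 2*t1] [2*t1; 2*t2; 2*t3; 2*t5]) by (try perm_solve; apply AP; lra).
    rewrite (lcP [2*t5; 2*t2; 2*t3; 2*t4] [2*t2; 2*t3; 2*t4; 2*t5]) by (try perm_solve; apply AP; lra).
    unfold A1, A5. simpl map.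
    assert (Rc1 : lattice_count [2*t2; 2*t3; 2*t4; 2*t5] T =
       Nat.add (lattice_count [2*t2; 2*t4; 2*t5] T) (lattice_count [2*t2; 2*t3; 2*t4; 2*t5] (T - 2 * t3))).
    { rewrite (lcP [2*t2; 2*t3; 2*t4; 2*t5] [2*t3; 2*t2; 2*t4; 2*t5] T) by (try perm_solve; apply AP; lra).
      rewrite lc_rec by (apply AP; lra).
      rewrite (lcP [2*t3; 2*t2; 2*t4; 2*t5] [2*t2; 2*t3; 2*t4; 2*t5]) by (try perm_solve; apply AP; lra).
      reflexivity. }
    assert (Rc5 : lattice_count [2*t1; 2*t2; 2*t3; 2*t4] T =
       Nat.add (lattice_count [2*t1; 2*t2; 2*t4] T) (lattice_count [2*t1; 2*t2; 2*t3; 2*t4] (T - 2 * t3))).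
    { rewrite (lcP [2*t1; 2*t2; 2*t3; 2*t4] [2*t3; 2*t1; 2*t2; 2*t4] T) by (try perm_solve; apply AP; lra).
      rewrite lc_rec by (apply AP; lra).
      rewrite (lcP [2*t3; 2*t1; 2*t2; 2*t4] [2*t1; 2*t2; 2*t3; 2*t4]) by (try perm_solve; apply AP; lra).
      reflexivity. }
    rewrite Rc1, Rc5. rewrite !plus_INR. rewrite !Rminus_0_r.
    replace (T - (t3 + 2 * t5)) with (T - t3 - 2 * t5) by ring.
    replace (T - (t3 + 2 * t1)) with (T - t3 - 2 * t1) by ring.
    cbn [prodR fold_right]. replace (INR (fact 3)) with 6 by (simpl; lra).
    unfold c. field. repeat split; lra.
  - assert (H2t3 : 0 <= t3 + 2 * t5) by lra.
    assert (H2t1 : 0 <= t3 + 2 * t1) by lra.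
    apply neg_plus; [apply neg_scale; unfold A1; apply (neg_sd _ P1 R1); auto; apply AP; lra|].
    apply neg_plus; [apply neg_scale; unfold A5; apply (neg_sd _ P5 R5); auto; apply AP; lra|].
    apply neg_plus; [apply neg_scale; apply small_neg; apply small_lc3; auto; [apply AP3; lra|lra]|].
    apply neg_plus; [apply neg_scale; apply small_neg; apply small_lc3; auto; [apply AP3; lra|lra]|].
    apply neg_plus; [apply small_neg; apply (small_lc_low _ _ 0); auto; [repeat constructor; lra|lra]|].
    apply neg_plus; [apply neg_scale; apply small_neg; apply (small_lc_low _ _ 0); auto; [repeat constructor; lra|lra]|].
    apply neg_plus; [apply small_neg; apply small_lc3; auto; apply AP3; lra|].
    apply neg_plus; [apply neg_scale; apply small_neg; apply small_lc3; auto; apply AP3; lra|].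
    apply neg_plus; [apply small_neg; apply (small_lc_low _ _ 1); auto; [repeat constructor; lra|lra]|].
    apply neg_scale; apply small_neg; apply (small_lc_low _ _ 1); auto; [repeat constructor; lra|lra].
Qed.
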